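(* Let $f:(0,\infty)\to\mathbb R$ be convex with $f(1)=0$, $n\ge2$ an integer, $\rho\ge1$. Then: (a) $\mathcal P_n(\rho)$ is non-empty, convex and compact. (b) For any $Q\in\mathcal P_n$ supported on $\mathcal A_n$, $D_f(\cdot\|Q)$ and $D_f(Q\|\cdot)$ attain their maxima over $\mathcal P_n(\rho)$. (c) Let $u_f(n,\rho):=\max_{Q\in\mathcal P_n(\rho)}D_f(Q\|U_n)$ and $v_f(n,\rho):=\max_{Q\in\mathcal P_n(\rho)}D_f(U_n\|Q)$. For $\rho>1$ let $\Gamma_n(\rho):=[\frac1{1+(n-1)\rho},\frac1n]$ and for $\beta\in\Gamma_n(\rho)$ let $i_\beta:=\lfloor\frac{1-n\beta}{(\rho-1)\beta}\rfloor$ and $Q_\beta(j):=\rho\beta$ for $j\le i_\beta$, $Q_\beta(i_\beta+1):=1-(n+i_\beta(\rho-1)-1)\beta$, $Q_\beta(j):=\beta$ for $i_\beta+2\le j\le n$. Then $Q_\beta\in\mathcal P_n(\rho)$, $u_f(n,\rho)=\max_{\beta\in\Gamma_n(\rho)}D_f(Q_\beta\|U_n)$ and $v_f(n,\rho)=\max_{\beta\in\Gamma_n(\rho)}D_f(U_n\|Q_\beta)$. (d) With $g_f^{(\rho)}(x):=xf\big(\frac{\rho}{1+(\rho-1)x}\big)+(1-x)f\big(\frac1{1+(\rho-1)x}\big)$, $x\in[0,1]$, and $f^\ast(t):=tf(1/t)$: $\max_{m\in\{0,\dots,n\}}g_f^{(\rho)}(\tfrac mn)\le u_f(n,\rho)\le\max_{x\in[0,1]}g_f^{(\rho)}(x)$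 and $\max_{m\in\{0,\dots,n\}}g_{f^\ast}^{(\rho)}(\tfrac mn)\le v_f(n,\rho)\le\max_{x\in[0,1]}g_{f^\ast}^{(\rho)}(x)$. (e) $\lim_{n\to\infty}u_f(n,\rho)=\max_{x\in[0,1]}g_f^{(\rho)}(x)$ and $\lim_{n\to\infty}v_f(n,\rho)=\max_{x\in[0,1]}\Big\{\frac{\rho x}{1+(\rho-1)x}f\big(\frac{1+(\rho-1)x}{\rho}\big)+\frac{(1-x)f(1+(\rho-1)x)}{1+(\rho-1)x}\Big\}$. (f) If $g_f^{(\rho)}$ is differentiable on $(0,1)$ with derivative bounded above by $K_f(\rho)\ge0$, then $0\le\lim_{n'\to\infty}u_f(n',\rho)-u_f(n,\rho)\le K_f(\rho)/n$. (g) With $f(0):=\lim_{t\to0}f(t)\in(-\infty,+\infty]$: $\lim_{\rho\to\infty}u_f(n,\rho)=(1-\frac1n)f(0)+\frac{f(n)}n$. If moreover $f(0)<\infty$, $f$ is differentiable on $(0,n)$ and $K_n:=\sup_{t\in(0,n)}|f'(t)|<\infty$, then for all $\rho\ge1$: $0\le\lim_{\rho'\to\infty}u_f(n,\rho')-u_f(n,\rho)\le\frac{2K_n(n-1)}{n+\rho-1}$. (h) If $f$ is twice differentiable and $0\le m\le f''(t)\le M$ for all $t\in[1/\rho,\rho]$, then for all $Q\in\mathcal P_n(\rho)$: $0\le\tfrac12m(n\|Q\|_2^2-1)\le D_f(Q\|U_n)\le\tfrac12M(n\|Q\|_2^2-1)\le\frac{M(\rho-1)^2}{8\rho}$, with equalities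 in the middle two inequalities for $\chi^2$ ($M=m=2$). (i) Let $d>0$. If $f$ is twice differentiable with $f''(t)\le M_f\in(0,\infty)$ for all $t>0$, then $D_f(Q\|U_n)\le d$ for all $Q\in\mathcal P_n(\rho)$ provided $\rho\le1+\frac{4d}{M_f}+\sqrt{\frac{8d}{M_f}+\frac{16d^2}{M_f^2}}$.
   Context: $\mathcal A_n:=\{1,\dots,n\}$, $\mathcal P_n$ is the set of probability mass functions on $\mathcal A_n$, $U_n$ is the uniform one, and for $\rho\ge1$, $\mathcal P_n(\rho)$ is the set of $Q\in\mathcal P_n$ with all masses positive and $q_{\max}/q_{\min}\le\rho$ ($q_{\max},q_{\min}$ the largest and smallest masses). $D_f(P\|Q)=\sum_xQ(x)f(P(x)/Q(x))$; $\|\cdot\|_2$ Euclidean norm. *)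

(* Defs.v *)
From Stdlib Require Import Reals Lra Lia Arith ClassicalEpsilon.
Open Scope R_scope.

Fixpoint rsum (n : nat) (F : nat -> R) : R :=
  match n with O => 0 | S k => rsum k F + F (S k) end.

Fixpoint qmax (n : nat) (F : nat -> R) : R :=
  match n with
  | O => 0
  | S k => match k with O => F 1%nat | _ => Rmax (qmax k F) (F (S k)) end
  end.
Fixpoint qmin (n : nat) (F : nat -> R) : R :=
  match n with
  | O => 0
  | S k => match k with O => F 1%nat | _ => Rmin (qmin k F) (F (S k)) end
  end.

(* A pmf on A_n = {1,...,n} is represented by its values at 1..n
   (values of the function outside 1..n are irrelevant). *)
Definition pmf (n : nat) (P : nat -> R) : Prop :=
  (forall i, (1 <= i <= n)%nat -> 0 <= P i) /\ rsum n P = 1.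

Definition full_support (n : nat) (P : nat -> R) : Prop :=
  forall i, (1 <= i <= n)%nat -> 0 < P i.

Definition Pnr (n : nat) (rho : R) (Q : nat -> R) : Prop :=
  pmf n Q /\ full_support n Q /\ qmax n Q / qmin n Q <= rho.

Definition Un (n : nat) : nat -> R := fun _ => / INR n.

Definition Df (f : R -> R) (n : nat) (P Q : nat -> R) : R :=
  rsum n (fun i => Q i * f (P i / Q i)).

Definition norm2 (n : nat) (Q : nat -> R) : R := sqrt (rsum n (fun i => Q i ^ 2)).

Definition convex_pos (f : R -> R) : Prop :=
  forall x y t, 0 < x -> 0 < y -> 0 <= t <= 1 ->
    f (t * x + (1 - t) * y) <= t * f x + (1 - t) * f y.

Definition is_max {T : Type} (S : T -> Prop) (F : T -> R) (m : R) : Prop :=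
  (exists x, S x /\ F x = m) /\ (forall x, S x -> F x <= m).

(* max_{x in S} F x  (meaningful when the maximum is attained) *)
Definition maxval {T : Type} (S : T -> Prop) (F : T -> R) : R :=
  epsilon (inhabits 0) (fun m => is_max S F m).

Definition unit_interval (x : R) : Prop := 0 <= x <= 1.

Definition uf (f : R -> R) (n : nat) (rho : R) : R :=
  maxval (Pnr n rho) (fun Q => Df f n Q (Un n)).
Definition vf (f : R -> R) (n : nat) (rho : R) : R :=
  maxval (Pnr n rho) (fun Q => Df f n (Un n) Q).

Definition Gamma_n (n : nat) (rho : R) (b : R) : Prop :=
  / (1 + (INR n - 1) * rho) <= b <= / INR n.

Definition i_beta (n : nat) (rho b : R) : nat :=
  Z.to_nat (Int_part ((1 - INR n * b) / ((rho - 1) * b))).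

Definition Qbeta (n : nat) (rho b : R) : nat -> R :=
  fun j =>
    let i := i_beta n rho b in
    if (j <=? i)%nat then rho * b
    else if (j =? S i)%nat then 1 - (INR n + INR i * (rho - 1) - 1) * b
    else b.

Definition gf (f : R -> R) (rho : R) (x : R) : R :=
  x * f (rho / (1 + (rho - 1) * x)) + (1 - x) * f (1 / (1 + (rho - 1) * x)).
Definition fstar (f : R -> R) (t : R) : R := t * f (1 / t).

(* the function whose maximum is lim v_f(n,rho) in (e) *)
Definition hv (f : R -> R) (rho : R) (x : R) : R :=
  rho * x / (1 + (rho - 1) * x) * f ((1 + (rho - 1) * x) / rho)
  + (1 - x) * f (1 + (rho - 1) * x) / (1 + (rho - 1) * x).

Definition chi2 (t : R) : R := (t - 1) ^ 2.

Definition seq_compact (n : nat) (A : (nat -> R) -> Prop) : Prop :=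
  forall Qs : nat -> nat -> R, (forall k, A (Qs k)) ->
    exists (phi : nat -> nat) (Q : nat -> R),
      (forall k, (phi k < phi (S k))%nat) /\ A Q /\
      forall i, (1 <= i <= n)%nat -> Un_cv (fun k => Qs (phi k) i) (Q i).

Definition convex_set (A : (nat -> R) -> Prop) : Prop :=
  forall P Q t, A P -> A Q -> 0 <= t <= 1 -> A (fun i => t * P i + (1 - t) * Q i).

Definition lim_right0 (f : R -> R) (L : R) : Prop :=
  forall eps, 0 < eps -> exists delta, 0 < delta /\
    forall t, 0 < t < delta -> Rabs (f t - L) < eps.
Definition div_right0 (f : R -> R) : Prop :=
  forall A, exists delta, 0 < delta /\ forall t, 0 < t < delta -> A < f t.
Definition lim_infty (F : R -> R) (L : R) : Prop :=
  forall eps, 0 < eps -> exists M, forall r, M <= r -> Rabs (F r - L) < eps.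
Definition div_infty (F : R -> R) : Prop :=
  forall A, exists M, forall r, M <= r -> A < F r.

Definition twice_diff_pos (f f1 f2 : R -> R) : Prop :=
  forall t, 0 < t -> derivable_pt_lim f t (f1 t) /\ derivable_pt_lim f1 t (f2 t).

(* Main.v *)
Require Import Defs.
From Stdlib Require Import Reals Lra Lia Arith ClassicalEpsilon Classical ZArith.
Open Scope R_scope.

Lemma rsum_ext n F G : (forall i, (1 <= i <= n)%nat -> F i = G i) -> rsum n F = rsum n G.
Proof. induction n; simpl; intros H; auto. rewrite IHn by (intros; apply H; lia). rewrite H by lia. auto. Qed.

Lemma rsum_plus n F G : rsum n (fun i => F i + G i) = rsum n F + rsum n G.
Proof. induction n; simpl; [lra|rewrite IHn; lra]. Qed.
Lemma rsum_scal n c F : rsum n (fun i => c * F i) = c * rsum n F.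
Proof. induction n; simpl; [lra|rewrite IHn; lra]. Qed.
Lemma rsum_const n c : rsum n (fun _ => c) = INR n * c.
Proof. induction n; cbn [rsum]; [simpl; lra|rewrite IHn, S_INR; lra]. Qed.
Lemma rsum_le n F G : (forall i, (1 <= i <= n)%nat -> F i <= G i) -> rsum n F <= rsum n G.
Proof. induction n; simpl; intros H; [lra|]. assert (H1:=H (S n) ltac:(lia)). assert (rsum n F <= rsum n G) by (apply IHn; intros; apply H; lia). lra. Qed.
Lemma rsum_nonneg n F : (forall i, (1 <= i <= n)%nat -> 0 <= F i) -> 0 <= rsum n F.
Proof. intros H. replace 0 with (rsum n (fun _ => 0)). apply rsum_le; auto. rewrite rsum_const; lra. Qed.

Lemma rsum_diff1 n F G j : (1 <= j <= n)%nat -> (forall i, (1 <= i <= n)%nat -> i <> j -> F i = G i) ->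
  rsum n F = rsum n G + F j - G j.
Proof. induction n; intros Hj H; simpl; [lia|].
  destruct (Nat.eq_dec j (S n)) as [->|Hn].
  - rewrite (rsum_ext n F G); [lra|]. intros; apply H; lia.
  - rewrite IHn; [| lia | intros; apply H; lia]. rewrite (H (S n)); [lra|lia|lia]. Qed.

Fixpoint cntT (n : nat) (T : nat -> bool) : nat :=
  match n with O => O | S k => (cntT k T + if T (S k) then 1 else 0)%nat end.

Lemma cntT_le n T : (cntT n T <= n)%nat.
Proof. induction n; simpl; auto. destruct (T (S n)); lia. Qed.

Lemma rsum_bool n (T : nat -> bool) (x y : R) : rsum n (fun i => if T i then x else y) = INR (cntT n T) * x + INR (n - cntT n T) * y.
Proof. induction n; cbn [rsum cntT]. simpl; lra. rewrite IHn. assert (H:=cntT_le n T).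
  destruct (T (S n)); rewrite ?Nat.add_0_r.
  - replace (n - cntT n T)%nat with (S n - (cntT n T + 1))%nat by lia. rewrite plus_INR. simpl; lra.
  - replace (S n - cntT n T)%nat with (S (n - cntT n T))%nat by lia. rewrite S_INR. lra.
Qed.

Lemma rsum_lim n (F : nat -> nat -> R) (L : nat -> R) :
  (forall i, (1 <= i <= n)%nat -> Un_cv (fun k => F k i) (L i)) ->
  Un_cv (fun k => rsum n (F k)) (rsum n L).
Proof. induction n; simpl; intros H.
  - intros e He; exists O; intros; rewrite R_dist_eq; auto.
  - apply CV_plus. apply IHn; intros; apply H; lia. apply H; lia. Qed.

Lemma qmax_spec n F : (1 <= n)%nat -> (forall i, (1 <= i <= n)%nat -> F i <= qmax n F) /\
  exists i, (1 <= i <= n)%nat /\ qmax n F = F i.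
Proof. induction n; intros Hn; [lia|]. destruct n.
  - simpl. split. intros i Hi; replace i with 1%nat by lia; lra. exists 1%nat; split; [lia|auto].
  - destruct IHn as [H1 [i [Hi Hq]]]; [lia|].
    change (qmax (S (S n)) F) with (Rmax (qmax (S n) F) (F (S (S n)))).
    split.
    + intros j Hj. destruct (Nat.eq_dec j (S (S n))) as [->|]. apply Rmax_r.
      eapply Rle_trans; [apply H1; lia| apply Rmax_l].
    + unfold Rmax; destruct (Rle_dec _ _). exists (S (S n)); split; [lia|auto]. exists i; split;[lia|auto].
Qed.

Lemma qmin_spec n F : (1 <= n)%nat -> (forall i, (1 <= i <= n)%nat -> qmin n F <= F i) /\
  exists i, (1 <= i <= n)%nat /\ qmin n F = F i.
Proof. induction n; intros Hn; [lia|]. destruct n.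
  - simpl. split. intros i Hi; replace i with 1%nat by lia; lra. exists 1%nat; split; [lia|auto].
  - destruct IHn as [H1 [i [Hi Hq]]]; [lia|].
    change (qmin (S (S n)) F) with (Rmin (qmin (S n) F) (F (S (S n)))).
    split.
    + intros j Hj. destruct (Nat.eq_dec j (S (S n))) as [->|]. apply Rmin_r.
      eapply Rle_trans; [apply Rmin_l| apply H1; lia].
    + unfold Rmin; destruct (Rle_dec _ _). exists i; split;[lia|auto]. exists (S (S n)); split; [lia|auto].
Qed.

Definition Pn' (n : nat) (rho : R) (Q : nat -> R) : Prop :=
  (forall i, (1 <= i <= n)%nat -> 0 < Q i) /\ rsum n Q = 1 /\
  (forall i j, (1 <= i <= n)%nat -> (1 <= j <= n)%nat -> Q i <= rho * Q j).

Lemma Pnr_iff n rho Q : (1 <= n)%nat -> (Pnr n rho Q <-> Pn' n rho Q).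
Proof. intros Hn. destruct (qmax_spec n Q Hn) as [Ma [i0 [Hi0 Hm]]].
  destruct (qmin_spec n Q Hn) as [Mi [j0 [Hj0 Hm']]]. split.
  - intros [[_ Hs] [Hp Hr]]. assert (0 < qmin n Q) by (rewrite Hm'; apply Hp; auto).
    split; [auto|split;[auto|]]. intros i j Hi Hj.
    apply Rmult_le_compat_r with (r := qmin n Q) in Hr; [|lra].
    unfold Rdiv in Hr; rewrite Rmult_assoc, Rinv_l, Rmult_1_r in Hr by lra.
    specialize (Ma i Hi); specialize (Mi j Hj). assert (0 < Q i) by (apply Hp; auto).
    assert (0 < rho) by nra. nra.
  - intros [Hp [Hs Hr]]. split; [split; auto; intros; left; auto|split; auto].
    rewrite Hm, Hm'. specialize (Hr i0 j0 Hi0 Hj0). specialize (Hp j0 Hj0).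
    apply Rmult_le_reg_r with (Q j0); auto. unfold Rdiv; rewrite Rmult_assoc, Rinv_l; lra.
Qed.

Lemma Pn'_lower n rho Q : Pn' n rho Q -> (1 <= n)%nat -> 1 <= rho -> forall j, (1 <= j <= n)%nat ->
  / (INR n * rho) <= Q j.
Proof. intros [Hp [Hs Hr]] Hn Hrho j Hj.
  assert (rsum n Q <= rsum n (fun _ => rho * Q j)) by (apply rsum_le; intros; apply Hr; auto).
  rewrite rsum_const, Hs in H. assert (0 < INR n) by (apply lt_0_INR; lia).
  apply Rmult_le_reg_l with (INR n * rho). nra. rewrite Rinv_r by nra. lra. Qed.

Definition bsum (n : nat) (rho : R) (T : nat -> bool) : R := rsum n (fun i => if T i then rho else 1).
Definition V (n : nat) (rho : R) (T : nat -> bool) : nat -> R :=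
  fun i => if T i then rho * / bsum n rho T else / bsum n rho T.

Lemma bsum_pos n rho T : (1 <= n)%nat -> 1 <= rho -> INR n <= bsum n rho T.
Proof. intros Hn Hr. rewrite <- (Rmult_1_r (INR n)), <- rsum_const. apply rsum_le. intros i _; destruct (T i); lra. Qed.

Lemma V_sum n rho T : (1 <= n)%nat -> 1 <= rho -> rsum n (V n rho T) = 1.
Proof. intros Hn Hr. assert (H:=bsum_pos n rho T Hn Hr). assert (1 <= INR n) by (apply (le_INR 1); lia).
  unfold V. rewrite (rsum_ext n _ (fun i => / bsum n rho T * (if T i then rho else 1))).
  rewrite rsum_scal. fold (bsum n rho T). field; lra. intros i _; destruct (T i); lra. Qed.

Lemma V_Pn' n rho T : (1 <= n)%nat -> 1 <= rho -> Pn' n rho (V n rho T).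
Proof. intros Hn Hr. assert (H:=bsum_pos n rho T Hn Hr). assert (1 <= INR n) by (apply (le_INR 1); lia).
  assert (0 < / bsum n rho T) by (apply Rinv_0_lt_compat; lra).
  split; [|split; [apply V_sum; auto|]].
  - intros i _; unfold V; destruct (T i); [apply Rmult_lt_0_compat|]; lra.
  - intros i j _ _; unfold V. set (b := / bsum n rho T).
    assert (0 <= (rho - 1) * b) by (apply Rmult_le_pos; unfold b; lra).
    assert (0 <= (rho - 1) * (rho * b)) by (apply Rmult_le_pos; [lra|apply Rmult_le_pos; unfold b; lra]).
    destruct (T i), (T j); lra.
Qed.

Definition obj (psi : nat -> R -> R) (n : nat) (Q : nat -> R) : R := rsum n (fun i => psi i (Q i)).

Lemma obj_ext psi n P Q : (forall i, (1 <= i <= n)%nat -> P i = Q i) -> obj psi n P = obj psi n Q.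
Proof. intros H; apply rsum_ext; intros; rewrite H; auto. Qed.

Lemma obj_convex psi n P Q t : (forall i, convex_pos (psi i)) ->
  (forall i, (1 <= i <= n)%nat -> 0 < P i /\ 0 < Q i) -> 0 <= t <= 1 ->
  obj psi n (fun i => t * P i + (1 - t) * Q i) <= t * obj psi n P + (1 - t) * obj psi n Q.
Proof. intros Hc Hp Ht. unfold obj. rewrite <- !rsum_scal, <- rsum_plus. apply rsum_le.
  intros i Hi; destruct (Hp i Hi); apply Hc; auto. Qed.

Lemma obj_convex_max psi n P Q R0 t : (forall i, convex_pos (psi i)) ->
  (forall i, (1 <= i <= n)%nat -> 0 < P i /\ 0 < Q i) -> 0 <= t <= 1 ->
  (forall i, (1 <= i <= n)%nat -> R0 i = t * P i + (1 - t) * Q i) ->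
  obj psi n R0 <= obj psi n P \/ obj psi n R0 <= obj psi n Q.
Proof. intros Hc Hp Ht HR. rewrite (obj_ext psi n R0 _ HR).
  assert (H:=obj_convex psi n P Q t Hc Hp Ht).
  destruct (Rle_dec (obj psi n P) (obj psi n Q)); [right|left]; nra. Qed.

Fixpoint nsum (n : nat) (g : nat -> nat) : nat :=
  match n with O => O | S k => (nsum k g + g (S k))%nat end.

Lemma nsum_lt n g g' : (forall i, (1 <= i <= n)%nat -> (g' i <= g i)%nat) ->
  (exists i, (1 <= i <= n)%nat /\ (g' i < g i)%nat) -> (nsum n g' < nsum n g)%nat.
Proof. induction n; intros H [i [Hi Hl]]; [lia|]. simpl.
  assert (forall m, (nsum m g' <= nsum m g)%nat -> True) by auto.
  destruct (Nat.eq_dec i (S n)) as [->|].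
  - assert (Hle : forall m, (m <= n)%nat -> (nsum m g' <= nsum m g)%nat).
    { induction m; simpl; intros; [lia|]. specialize (H (S m) ltac:(lia)). specialize (IHm ltac:(lia)). lia. }
    specialize (Hle n (le_n n)). lia.
  - assert (nsum n g' < nsum n g)%nat by (apply IHn; [intros; apply H; lia| exists i; split; [lia|auto]]).
    specialize (H (S n) ltac:(lia)). lia.
Qed.

Section Core.
Variable psi : nat -> R -> R.
Hypothesis Hconv : forall i, convex_pos (psi i).
Variables (n : nat) (rho a : R).
Hypothesis Hn : (1 <= n)%nat.
Hypothesis Hrho : 1 <= rho.
Hypothesis Ha : 0 < a.

Definition Sa (Q : nat -> R) : Prop := (forall i, (1 <= i <= n)%nat -> a <= Q i <= rho * a) /\ rsum n Q = 1.
Definition intr (Q : nat -> R) (i : nat) : nat :=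
  if Rlt_dec a (Q i) then if Rlt_dec (Q i) (rho * a) then 1%nat else 0%nat else 0%nat.
Definition interior (Q : nat -> R) (i : nat) : Prop := a < Q i < rho * a.

Lemma intr_le1 Q i : (intr Q i <= 1)%nat.
Proof. unfold intr; destruct (Rlt_dec _ _); [destruct (Rlt_dec _ _)|]; lia. Qed.
Lemma intr_1 Q i : interior Q i -> intr Q i = 1%nat.
Proof. unfold intr, interior; intros [H1 H2]; destruct (Rlt_dec _ _); [destruct (Rlt_dec _ _)|]; try lia; lra. Qed.
Lemma intr_0 Q i : ~ interior Q i -> intr Q i = 0%nat.
Proof. unfold intr, interior; intros H; destruct (Rlt_dec _ _); [destruct (Rlt_dec _ _)|]; try lia; tauto. Qed.

Definition shift (Q : nat -> R) (i j : nat) (t : R) : nat -> R :=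
  fun k => if (k =? i)%nat then Q i + t else if (k =? j)%nat then Q j - t else Q k.

Lemma shift_sum Q i j t : (1 <= i <= n)%nat -> (1 <= j <= n)%nat -> i <> j ->
  rsum n (shift Q i j t) = rsum n Q.
Proof. intros Hi Hj Hij.
  rewrite (rsum_diff1 n (shift Q i j t) (fun k => if (k =? j)%nat then Q j - t else Q k) i Hi).
  rewrite (rsum_diff1 n (fun k => if (k =? j)%nat then Q j - t else Q k) Q j Hj).
  unfold shift; cbv beta; rewrite !Nat.eqb_refl. destruct (Nat.eqb_spec i j); [lia|]. lra.
  intros k _ Hk. destruct (Nat.eqb_spec k j); [lia|auto].
  intros k _ Hk. unfold shift. destruct (Nat.eqb_spec k i); [lia|auto].
Qed.

Lemma smooth_step Q i j : Sa Q -> (1 <= i <= n)%nat -> (1 <= j <= n)%nat -> i <> j ->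
  interior Q i -> interior Q j ->
  exists Q', Sa Q' /\ obj psi n Q <= obj psi n Q' /\ (nsum n (intr Q') < nsum n (intr Q))%nat.
Proof. intros [HQ HQs] Hi Hj Hij [Hi1 Hi2] [Hj1 Hj2].
  set (tp := Rmin (rho * a - Q i) (Q j - a)).
  set (tm := Rmin (Q i - a) (rho * a - Q j)).
  assert (Htp : 0 < tp) by (unfold tp; apply Rmin_glb_lt; lra).
  assert (Htm : 0 < tm) by (unfold tm; apply Rmin_glb_lt; lra).
  assert (tp <= rho * a - Q i /\ tp <= Q j - a) by (unfold tp; split; [apply Rmin_l|apply Rmin_r]).
  assert (tm <= Q i - a /\ tm <= rho * a - Q j) by (unfold tm; split; [apply Rmin_l|apply Rmin_r]).
  set (A := shift Q i j (- tm)). set (B := shift Q i j tp).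
  set (lam := tp / (tp + tm)).
  assert (Hlam : 0 <= lam <= 1) by (unfold lam; split; [apply Rmult_le_pos; [lra|left; apply Rinv_0_lt_compat; lra]|
     apply Rmult_le_reg_r with (tp + tm); [lra|]; unfold Rdiv; rewrite Rmult_assoc, Rinv_l; lra]).
  assert (HSA : Sa A).
  { split. intros k Hk. unfold A, shift. destruct (Nat.eqb_spec k i). lra. destruct (Nat.eqb_spec k j). lra. auto.
    unfold A; rewrite shift_sum; auto. }
  assert (HSB : Sa B).
  { split. intros k Hk. unfold B, shift. destruct (Nat.eqb_spec k i). lra. destruct (Nat.eqb_spec k j). lra. auto.
    unfold B; rewrite shift_sum; auto. }
  assert (Hle : forall t k, (1 <= k <= n)%nat -> (intr (shift Q i j t) k <= intr Q k)%nat).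
  { intros t k Hk. unfold intr at 1. unfold shift. destruct (Nat.eqb_spec k i) as [->|].
    rewrite (intr_1 Q i) by (split; lra). destruct (Rlt_dec _ _); [destruct (Rlt_dec _ _)|]; lia.
    destruct (Nat.eqb_spec k j) as [->|]. rewrite (intr_1 Q j) by (split; lra).
    destruct (Rlt_dec _ _); [destruct (Rlt_dec _ _)|]; lia.
    unfold intr. auto. }
  assert (Hcomb : forall k, (1 <= k <= n)%nat -> Q k = lam * A k + (1 - lam) * B k).
  { intros k Hk. unfold A, B, shift. assert (Hl : lam * tm = (1 - lam) * tp) by (unfold lam; field; lra).
    destruct (Nat.eqb_spec k i) as [->|].
    replace (lam * (Q i + - tm) + (1 - lam) * (Q i + tp)) with (Q i + ((1 - lam) * tp - lam * tm)) by ring.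
    rewrite Hl; ring.
    destruct (Nat.eqb_spec k j) as [->|].
    replace (lam * (Q j - - tm) + (1 - lam) * (Q j - tp)) with (Q j - ((1 - lam) * tp - lam * tm)) by ring.
    rewrite Hl; ring. ring. }
  assert (Hpos : forall k, (1 <= k <= n)%nat -> 0 < A k /\ 0 < B k).
  { intros k Hk. destruct HSA as [HA _]; destruct HSB as [HB _]. specialize (HA k Hk); specialize (HB k Hk). lra. }
  destruct (obj_convex_max psi n A B Q lam Hconv Hpos Hlam Hcomb) as [HoA|HoB].
  - exists A; split; auto; split; auto. apply nsum_lt. intros; apply Hle; auto.
    unfold tm in *. destruct (Rle_dec (Q i - a) (rho * a - Q j)).
    + exists i; split; auto. rewrite (intr_1 Q i) by (split; lra). rewrite intr_0. lia.
      unfold interior, A, shift. rewrite Nat.eqb_refl. rewrite Rmin_left by auto. lra.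
    + exists j; split; auto. rewrite (intr_1 Q j) by (split; lra). rewrite intr_0. lia.
      unfold interior, A, shift. rewrite Nat.eqb_refl. destruct (Nat.eqb_spec j i); [lia|].
      rewrite Rmin_right by lra. lra.
  - exists B; split; auto; split; auto. apply nsum_lt. intros; apply Hle; auto.
    unfold tp in *. destruct (Rle_dec (rho * a - Q i) (Q j - a)).
    + exists i; split; auto. rewrite (intr_1 Q i) by (split; lra). rewrite intr_0. lia.
      unfold interior, B, shift. rewrite Nat.eqb_refl. rewrite Rmin_left by auto. lra.
    + exists j; split; auto. rewrite (intr_1 Q j) by (split; lra). rewrite intr_0. lia.
      unfold interior, B, shift. rewrite Nat.eqb_refl. destruct (Nat.eqb_spec j i); [lia|].
      rewrite Rmin_right by lra. lra.
Qed.

Lemma smooth_all N : forall Q, nsum n (intr Q) = N -> Sa Q ->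
  exists Q', Sa Q' /\ obj psi n Q <= obj psi n Q' /\
    (forall i j, (1 <= i <= n)%nat -> (1 <= j <= n)%nat -> interior Q' i -> interior Q' j -> i = j).
Proof. induction N as [N IH] using lt_wf_ind. intros Q HN HS.
  destruct (classic (exists i j, (1 <= i <= n)%nat /\ (1 <= j <= n)%nat /\ interior Q i /\ interior Q j /\ i <> j))
    as [[i [j [Hi [Hj [Ii [Ij Hij]]]]]]|Hno].
  - destruct (smooth_step Q i j HS Hi Hj Hij Ii Ij) as [Q' [HS' [Ho Hlt]]].
    destruct (IH (nsum n (intr Q')) ltac:(lia) Q' eq_refl HS') as [Q'' [H1 [H2 H3]]].
    exists Q''; split; [auto|split; [lra|auto]].
  - exists Q; split; auto; split; [lra|]. intros i j Hi Hj Ii Ij. apply NNPP; intro; apply Hno; exists i, j; auto.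
Qed.

Lemma final_step Q : Sa Q ->
  (forall i j, (1 <= i <= n)%nat -> (1 <= j <= n)%nat -> interior Q i -> interior Q j -> i = j) ->
  exists T, obj psi n Q <= obj psi n (V n rho T).
Proof. intros [HQ HQs] Huniq.
  destruct (classic (exists j, (1 <= j <= n)%nat /\ interior Q j)) as [[j [Hj Ij]]|Hno].
  - set (T := fun i => if (i =? j)%nat then false else if Rlt_dec a (Q i) then true else false).
    set (T' := fun i => if (i =? j)%nat then true else T i).
    assert (HQT : forall i, (1 <= i <= n)%nat -> i <> j -> Q i = a * (if T i then rho else 1)).
    { intros i Hi Hij. unfold T. destruct (Nat.eqb_spec i j); [lia|].
      destruct (Rlt_dec a (Q i)).
      - destruct (Req_dec (Q i) (rho * a)). lra. exfalso. apply Hij, Huniq; auto. split; auto.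
        destruct (HQ i Hi); lra.
      - destruct (HQ i Hi); lra. }
    assert (E0 : rsum n Q = a * bsum n rho T + Q j - a).
    { unfold bsum. rewrite <- rsum_scal. rewrite (rsum_diff1 n Q (fun i => a * (if T i then rho else 1)) j Hj).
      unfold T; rewrite Nat.eqb_refl; ring. intros i Hi Hij; apply HQT; auto. }
    assert (E1 : rsum n Q = a * bsum n rho T' + Q j - rho * a).
    { unfold bsum. rewrite <- rsum_scal. rewrite (rsum_diff1 n Q (fun i => a * (if T' i then rho else 1)) j Hj).
      unfold T'; rewrite Nat.eqb_refl; ring. intros i Hi Hij; unfold T'.
      destruct (Nat.eqb_spec i j); [lia|]. apply HQT; auto. }
    destruct Ij as [Ij1 Ij2].
    assert (H0 := bsum_pos n rho T Hn Hrho). assert (H1 := bsum_pos n rho T' Hn Hrho).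
    assert (1 <= INR n) by (apply (le_INR 1); lia).
    set (b0 := / bsum n rho T). set (b1 := / bsum n rho T').
    assert (Hb0 : a < b0) by (unfold b0; apply Rmult_lt_reg_l with (bsum n rho T); [lra|]; rewrite Rinv_r; lra).
    assert (Hb1 : b1 < a) by (unfold b1; apply Rmult_lt_reg_l with (bsum n rho T'); [lra|]; rewrite Rinv_r; lra).
    set (t := (a - b1) / (b0 - b1)).
    assert (Ht : 0 <= t <= 1) by (unfold t; split; [apply Rmult_le_pos; [lra|left; apply Rinv_0_lt_compat; lra]|
       apply Rmult_le_reg_r with (b0 - b1); [lra|]; unfold Rdiv; rewrite Rmult_assoc, Rinv_l; lra]).
    assert (Hta : t * b0 + (1 - t) * b1 = a) by (unfold t; field; lra).
    assert (Hoff : forall i, (1 <= i <= n)%nat -> i <> j -> Q i = t * V n rho T i + (1 - t) * V n rho T' i).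
    { intros i Hi Hij. rewrite HQT; auto. unfold V. fold b0 b1.
      assert (T' i = T i) by (unfold T'; destruct (Nat.eqb_spec i j); [lia|auto]). rewrite H2.
      destruct (T i); nra. }
    assert (Hall : forall i, (1 <= i <= n)%nat -> Q i = t * V n rho T i + (1 - t) * V n rho T' i).
    { intros i Hi. destruct (Nat.eq_dec i j) as [->|]; auto.
      assert (Hs : rsum n (fun i => t * V n rho T i + (1 - t) * V n rho T' i) = 1).
      { rewrite rsum_plus, !rsum_scal, !V_sum; auto; ring. }
      rewrite (rsum_diff1 n Q _ j Hj Hoff) in HQs. lra. }
    assert (Hp : forall i, (1 <= i <= n)%nat -> 0 < V n rho T i /\ 0 < V n rho T' i).
    { intros i Hi. destruct (V_Pn' n rho T Hn Hrho) as [A1 _]. destruct (V_Pn' n rho T' Hn Hrho) as [A2 _]. auto. }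
    destruct (obj_convex_max psi n _ _ Q t Hconv Hp Ht Hall); eauto.
  - set (T := fun i => if Rlt_dec a (Q i) then true else false).
    assert (HQT : forall i, (1 <= i <= n)%nat -> Q i = a * (if T i then rho else 1)).
    { intros i Hi. unfold T. destruct (HQ i Hi). destruct (Rlt_dec a (Q i)).
      - destruct (Req_dec (Q i) (rho * a)). lra. exfalso. apply Hno. exists i; split; auto. split; lra.
      - lra. }
    assert (E : 1 = a * bsum n rho T).
    { rewrite <- HQs. unfold bsum. rewrite <- rsum_scal. apply rsum_ext; auto. }
    assert (H0 := bsum_pos n rho T Hn Hrho). assert (1 <= INR n) by (apply (le_INR 1); lia).
    exists T. right. apply obj_ext. intros i Hi. rewrite HQT by auto. unfold V.
    assert (a = / bsum n rho T) by (apply Rmult_eq_reg_l with (bsum n rho T); [rewrite Rinv_r|]; lra).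
    rewrite H1; destruct (T i); ring.
Qed.

Lemma core_a Q : Sa Q -> exists T, obj psi n Q <= obj psi n (V n rho T).
Proof. intros HS. destruct (smooth_all _ Q eq_refl HS) as [Q' [HS' [Ho Hu]]].
  destruct (final_step Q' HS' Hu) as [T HT]. exists T; lra. Qed.
End Core.

Definition upd (T : nat -> bool) (k : nat) (b : bool) : nat -> bool := fun i => if (i =? k)%nat then b else T i.

Lemma finite_max k (F : (nat -> bool) -> R) :
  (forall T T', (forall i, (1 <= i <= k)%nat -> T i = T' i) -> F T = F T') ->
  exists Ts, forall T, F T <= F Ts.
Proof. revert F. induction k; intros F HF.
  - exists (fun _ => true). intros T. right. apply HF. intros; lia.
  - destruct (IHk (fun T => F (upd T (S k) false))) as [T0 H0].
    { intros T T' H. apply HF. intros i Hi. unfold upd. destruct (Nat.eqb_spec i (S k)); auto. apply H; lia. }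
    destruct (IHk (fun T => F (upd T (S k) true))) as [T1 H1].
    { intros T T' H. apply HF. intros i Hi. unfold upd. destruct (Nat.eqb_spec i (S k)); auto. apply H; lia. }
    simpl in *. destruct (Rle_dec (F (upd T0 (S k) false)) (F (upd T1 (S k) true))).
    + exists (upd T1 (S k) true). intros T. rewrite (HF T (upd T (S k) (T (S k)))).
      destruct (T (S k)); [apply H1| eapply Rle_trans; [apply H0|auto]].
      intros i _; unfold upd; destruct (Nat.eqb_spec i (S k)); subst; auto.
    + exists (upd T0 (S k) false). intros T. rewrite (HF T (upd T (S k) (T (S k)))).
      destruct (T (S k)); [eapply Rle_trans; [apply H1|lra]| apply H0].
      intros i _; unfold upd; destruct (Nat.eqb_spec i (S k)); subst; auto.
Qed.

Lemma V_ext n rho T T' : (forall i, (1 <= i <= n)%nat -> T i = T' i) ->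
  forall i, (1 <= i <= n)%nat -> V n rho T i = V n rho T' i.
Proof. intros H i Hi. unfold V, bsum. rewrite (rsum_ext n (fun i => if T i then rho else 1) (fun i => if T' i then rho else 1)).
  rewrite H; auto. intros; rewrite H; auto. Qed.

Lemma vertex_max psi n rho : (forall i, convex_pos (psi i)) -> (1 <= n)%nat -> 1 <= rho ->
  exists Ts, Pnr n rho (V n rho Ts) /\ forall Q, Pnr n rho Q -> obj psi n Q <= obj psi n (V n rho Ts).
Proof. intros Hc Hn Hr.
  destruct (finite_max n (fun T => obj psi n (V n rho T))) as [Ts HTs].
  { intros T T' H. apply obj_ext. apply V_ext; auto. }
  exists Ts. split. apply Pnr_iff; auto. apply V_Pn'; auto.
  intros Q HQ. apply Pnr_iff in HQ; auto. destruct HQ as [Hp [Hs Hrat]].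
  destruct (qmin_spec n Q Hn) as [Hmin [j0 [Hj0 Hm]]].
  assert (Ha : 0 < qmin n Q) by (rewrite Hm; auto).
  destruct (core_a psi Hc n rho (qmin n Q) Hn Hr Ha Q) as [T HT].
  { split; auto. intros i Hi. split; auto. rewrite Hm; auto. }
  eapply Rle_trans; [apply HT| apply HTs].
Qed.

Lemma maxval_eq {T : Type} (S : T -> Prop) (F : T -> R) m : is_max S F m -> maxval S F = m.
Proof. intros H. assert (H' : is_max S F (maxval S F)) by (unfold maxval; apply epsilon_spec; eauto).
  destruct H as [[x [Sx Fx]] Hx]. destruct H' as [[y [Sy Fy]] Hy].
  specialize (Hx y Sy). specialize (Hy x Sx). lra. Qed.

Lemma is_max_ext {T : Type} (S : T -> Prop) (F G : T -> R) m : (forall x, S x -> F x = G x) -> is_max S F m -> is_max S G m.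
Proof. intros H [[x [Sx Fx]] Hx]. split. exists x; split; auto; rewrite <- H; auto. intros y Sy; rewrite <- H; auto. Qed.

Lemma conv1 f c : convex_pos f -> 0 < c -> convex_pos (fun p => c * f (p / c)).
Proof. intros Hf Hc x y t Hx Hy Ht.
  replace ((t * x + (1 - t) * y) / c) with (t * (x / c) + (1 - t) * (y / c)) by (field; lra).
  assert (H := Hf (x / c) (y / c) t ltac:(apply Rdiv_lt_0_compat; lra) ltac:(apply Rdiv_lt_0_compat; lra) Ht).
  apply Rmult_le_compat_l with (r := c) in H; lra. Qed.

Lemma conv2 f c : convex_pos f -> 0 < c -> convex_pos (fun p => p * f (c / p)).
Proof. intros Hf Hc x y t Hx Hy Ht.
  set (p := t * x + (1 - t) * y). assert (Hp : 0 < p) by (unfold p; nra).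
  set (mu := t * x / p).
  assert (Hmu : 0 <= mu <= 1) by (unfold mu; split; [apply Rmult_le_pos; [nra|left; apply Rinv_0_lt_compat; lra]|
      apply Rmult_le_reg_r with p; [lra|]; unfold Rdiv; rewrite Rmult_assoc, Rinv_l by lra; unfold p; nra]).
  assert (E : c / p = mu * (c / x) + (1 - mu) * (c / y)) by (unfold mu, p in *; field; lra).
  assert (H := Hf (c / x) (c / y) mu ltac:(apply Rdiv_lt_0_compat; lra) ltac:(apply Rdiv_lt_0_compat; lra) Hmu).
  rewrite <- E in H. apply Rmult_le_compat_l with (r := p) in H; [|lra].
  replace (p * (mu * f (c / x) + (1 - mu) * f (c / y))) with (t * (x * f (c / x)) + (1 - t) * (y * f (c / y))) in H
    by (unfold mu, p in *; field; lra). auto. Qed.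

Definition psi1 (f : R -> R) (Q : nat -> R) : nat -> R -> R :=
  fun i p => if Rlt_dec 0 (Q i) then Q i * f (p / Q i) else 0.
Definition psi2 (f : R -> R) (Q : nat -> R) : nat -> R -> R :=
  fun i p => if Rlt_dec 0 (Q i) then p * f (Q i / p) else 0.

Lemma psi1_conv f Q : convex_pos f -> forall i, convex_pos (psi1 f Q i).
Proof. intros Hf i. unfold psi1. destruct (Rlt_dec 0 (Q i)). apply conv1; auto. intros x y t _ _ _; lra. Qed.
Lemma psi2_conv f Q : convex_pos f -> forall i, convex_pos (psi2 f Q i).
Proof. intros Hf i. unfold psi2. destruct (Rlt_dec 0 (Q i)). apply conv2; auto. intros x y t _ _ _; lra. Qed.

Lemma obj_psi1 f n Q P : full_support n Q -> obj (psi1 f Q) n P = Df f n P Q.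
Proof. intros H. apply rsum_ext. intros i Hi. unfold psi1. destruct (Rlt_dec 0 (Q i)); auto. exfalso; apply n0, H; auto. Qed.
Lemma obj_psi2 f n Q P : full_support n Q -> obj (psi2 f Q) n P = Df f n Q P.
Proof. intros H. apply rsum_ext. intros i Hi. unfold psi2. destruct (Rlt_dec 0 (Q i)); auto. exfalso; apply n0, H; auto. Qed.

Lemma cntT_le_m n m : cntT n (fun i => (i <=? m)%nat) = Nat.min n m.
Proof. induction n; cbn [cntT]; auto. rewrite IHn. destruct (Nat.leb_spec (S n) m); lia. Qed.

Lemma bsum_cnt n rho T : bsum n rho T = INR (cntT n T) * rho + (INR n - INR (cntT n T)).
Proof. unfold bsum. rewrite rsum_bool, minus_INR by apply cntT_le. ring. Qed.

Lemma Un_full n : (1 <= n)%nat -> full_support n (Un n).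
Proof. intros Hn i _. unfold Un. apply Rinv_0_lt_compat, lt_0_INR; lia. Qed.

Lemma unif_V1 f n rho T : (1 <= n)%nat -> 1 <= rho ->
  Df f n (V n rho T) (Un n) = gf f rho (INR (cntT n T) / INR n).
Proof. intros Hn Hr. assert (Hn' : 1 <= INR n) by (apply (le_INR 1); lia).
  assert (HB := bsum_pos n rho T Hn Hr).
  unfold Df, Un, V.
  rewrite (rsum_ext n _ (fun i => if T i then / INR n * f (rho * / bsum n rho T / / INR n) else / INR n * f (/ bsum n rho T / / INR n)))
    by (intros i _; destruct (T i); auto).
  rewrite rsum_bool. unfold gf. rewrite minus_INR by apply cntT_le.
  assert (E : bsum n rho T = INR n * (1 + (rho - 1) * (INR (cntT n T) / INR n))) by (rewrite bsum_cnt; field; lra).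
  set (D := 1 + (rho - 1) * (INR (cntT n T) / INR n)) in *.
  assert (0 < D) by (apply Rmult_lt_reg_l with (INR n); lra).
  replace (rho * / bsum n rho T / / INR n) with (rho / D) by (rewrite E; field; lra).
  replace (/ bsum n rho T / / INR n) with (1 / D) by (rewrite E; field; lra).
  field; lra.
Qed.

Lemma unif_V2 f n rho T : (1 <= n)%nat -> 1 <= rho ->
  Df f n (Un n) (V n rho T) = gf (fstar f) rho (INR (cntT n T) / INR n).
Proof. intros Hn Hr. assert (Hn' : 1 <= INR n) by (apply (le_INR 1); lia).
  assert (HB := bsum_pos n rho T Hn Hr).
  unfold Df, Un, V.
  rewrite (rsum_ext n _ (fun i => if T i then rho * / bsum n rho T * f (/ INR n / (rho * / bsum n rho T)) else / bsum n rho T * f (/ INR n / / bsum n rho T)))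
    by (intros i _; destruct (T i); auto).
  rewrite rsum_bool. unfold gf, fstar. rewrite minus_INR by apply cntT_le.
  assert (E : bsum n rho T = INR n * (1 + (rho - 1) * (INR (cntT n T) / INR n))) by (rewrite bsum_cnt; field; lra).
  set (D := 1 + (rho - 1) * (INR (cntT n T) / INR n)) in *.
  assert (0 < D) by (apply Rmult_lt_reg_l with (INR n); lra).
  replace (/ INR n / (rho * / bsum n rho T)) with (1 / (rho / D)) by (rewrite E; field; lra).
  replace (/ INR n / / bsum n rho T) with (1 / (1 / D)) by (rewrite E; field; lra).
  rewrite E. field; lra.
Qed.

Lemma struct_gen psi n rho (Phi : (nat -> R) -> R) (g : R -> R) :
  (forall i, convex_pos (psi i)) -> (1 <= n)%nat -> 1 <= rho ->
  (forall P, Phi P = obj psi n P) -> (forall T, Phi (V n rho T) = g (INR (cntT n T) / INR n)) ->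
  exists M, is_max (Pnr n rho) Phi M /\ is_max (fun m => (m <= n)%nat) (fun m => g (INR m / INR n)) M.
Proof. intros Hc Hn Hr HPhi Hg. destruct (vertex_max psi n rho Hc Hn Hr) as [Ts [HTs Hmax]].
  exists (Phi (V n rho Ts)). split.
  - split. exists (V n rho Ts); auto. intros Q HQ. rewrite !HPhi. auto.
  - split. exists (cntT n Ts). split. apply cntT_le. rewrite Hg; auto.
    intros m Hm. replace (INR m) with (INR (cntT n (fun i => (i <=? m)%nat))) by (rewrite cntT_le_m; f_equal; lia).
    rewrite <- Hg, !HPhi. apply Hmax. apply Pnr_iff; auto. apply V_Pn'; auto.
Qed.

Lemma u_struct f n rho : convex_pos f -> (1 <= n)%nat -> 1 <= rho ->
  exists M, is_max (Pnr n rho) (fun Q => Df f n Q (Un n)) M /\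
            is_max (fun m => (m <= n)%nat) (fun m => gf f rho (INR m / INR n)) M.
Proof. intros Hf Hn Hr. apply (struct_gen (psi1 f (Un n))); auto. apply psi1_conv; auto.
  intros P; rewrite obj_psi1; auto. apply Un_full; auto. intros; apply unif_V1; auto. Qed.

Lemma v_struct f n rho : convex_pos f -> (1 <= n)%nat -> 1 <= rho ->
  exists M, is_max (Pnr n rho) (fun Q => Df f n (Un n) Q) M /\
            is_max (fun m => (m <= n)%nat) (fun m => gf (fstar f) rho (INR m / INR n)) M.
Proof. intros Hf Hn Hr. apply (struct_gen (psi2 f (Un n))); auto. apply psi2_conv; auto.
  intros P; rewrite obj_psi2; auto. apply Un_full; auto. intros; apply unif_V2; auto. Qed.

Lemma Int_part_INR m : Int_part (INR m) = Z.of_nat m.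
Proof. unfold Int_part. rewrite <- (up_tech (INR m) (Z.of_nat m)). ring.
  rewrite INR_IZR_INZ; lra. rewrite plus_IZR, <- INR_IZR_INZ; simpl; lra. Qed.

Lemma ibeta_vertex n rho m : 1 < rho -> (1 <= n)%nat -> (m <= n)%nat ->
  i_beta n rho (/ (INR m * rho + (INR n - INR m))) = m.
Proof. intros Hr Hn Hm. unfold i_beta. assert (INR m <= INR n) by (apply le_INR; auto).
  assert (0 <= INR m) by apply pos_INR. assert (1 <= INR n) by (apply (le_INR 1); lia).
  assert (0 < INR m * rho + (INR n - INR m)) by nra.
  replace ((1 - INR n * / (INR m * rho + (INR n - INR m))) / ((rho - 1) * / (INR m * rho + (INR n - INR m))))
    with (INR m) by (field; lra).
  rewrite Int_part_INR. apply Nat2Z.id.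
Qed.

Lemma Qbeta_vertex n rho m : 1 < rho -> (1 <= n)%nat -> (m <= n)%nat ->
  forall j, (1 <= j <= n)%nat ->
  Qbeta n rho (/ (INR m * rho + (INR n - INR m))) j = V n rho (fun i => (i <=? m)%nat) j.
Proof. intros Hr Hn Hm j Hj. unfold Qbeta, V. rewrite ibeta_vertex by auto.
  rewrite bsum_cnt, cntT_le_m. replace (Nat.min n m) with m by lia.
  assert (INR m <= INR n) by (apply le_INR; auto).
  assert (0 <= INR m) by apply pos_INR. assert (1 <= INR n) by (apply (le_INR 1); lia).
  assert (0 < INR m * rho + (INR n - INR m)) by nra.
  destruct (j <=? m)%nat; auto. destruct (j =? S m)%nat; auto. field; lra.
Qed.

Lemma Qbeta_Pn' n rho b : 1 < rho -> (1 <= n)%nat -> Gamma_n n rho b -> Pn' n rho (Qbeta n rho b).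
Proof. intros Hr Hn [Hb1 Hb2]. assert (1 <= INR n) by (apply (le_INR 1); lia).
  assert (Hd : 0 < 1 + (INR n - 1) * rho) by nra.
  assert (Hb : 0 < b) by (eapply Rlt_le_trans; [apply Rinv_0_lt_compat; exact Hd|auto]).
  set (X := (1 - INR n * b) / ((rho - 1) * b)).
  assert (HX : X * ((rho - 1) * b) = 1 - INR n * b) by (unfold X; field; nra).
  assert (HX0 : 0 <= X).
  { apply Rmult_le_reg_r with ((rho - 1) * b). nra. rewrite HX.
    apply Rmult_le_compat_r with (r := INR n) in Hb2; [|lra]. rewrite Rinv_l in Hb2; lra. }
  assert (HX1 : X <= INR n - 1).
  { apply Rmult_le_reg_r with ((rho - 1) * b). nra. rewrite HX.
    apply Rmult_le_compat_r with (r := 1 + (INR n - 1) * rho) in Hb1; [|lra]. rewrite Rinv_l in Hb1; lra. }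
  destruct (base_Int_part X) as [Hz1 Hz2].
  assert (Hz0 : (0 <= Int_part X)%Z) by (assert (-1 < Int_part X)%Z by (apply lt_IZR; simpl; lra); lia).
  set (i := i_beta n rho b).
  assert (Hi : INR i = IZR (Int_part X)) by (unfold i, i_beta; fold X; rewrite INR_IZR_INZ, Z2Nat.id; auto).
  assert (Hin : (i <= n - 1)%nat).
  { assert (INR i <= INR (n - 1)) by (rewrite minus_INR by lia; change (INR 1) with 1; lra). apply INR_le; auto. }
  set (c := 1 - (INR n + INR i * (rho - 1) - 1) * b).
  assert (Hp1 : 0 <= (rho - 1) * b * (X - INR i)) by (apply Rmult_le_pos; nra).
  assert (Hp2 : 0 <= (rho - 1) * b * (1 - (X - INR i))) by (apply Rmult_le_pos; nra).
  assert (Hc1 : b <= c) by (unfold c; lra).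
  assert (Hc2 : c <= rho * b) by (unfold c; lra).
  assert (Hval : forall j, b <= Qbeta n rho b j <= rho * b).
  { intros j. unfold Qbeta. fold i. fold c. destruct (j <=? i)%nat. nra. destruct (j =? S i)%nat; nra. }
  split; [|split].
  - intros j _. specialize (Hval j); lra.
  - rewrite (rsum_diff1 n _ (fun j => if (j <=? i)%nat then rho * b else b) (S i)); [| lia |].
    + rewrite rsum_bool, cntT_le_m. replace (Nat.min n i) with i by lia.
      unfold Qbeta; fold i; fold c. rewrite Nat.eqb_refl. replace (S i <=? i)%nat with false by (symmetry; apply Nat.leb_gt; lia).
      rewrite minus_INR by lia. unfold c. ring.
    + intros j _ Hj. unfold Qbeta; fold i. destruct (j <=? i)%nat; auto. destruct (Nat.eqb_spec j (S i)); [lia|auto].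
  - intros j k _ _. assert (H1 := Hval j); assert (H2 := Hval k). nra.
Qed.

Lemma gamma_max n rho (Phi : (nat -> R) -> R) (g : R -> R) M : 1 < rho -> (1 <= n)%nat ->
  (forall P P', (forall i, (1 <= i <= n)%nat -> P i = P' i) -> Phi P = Phi P') ->
  (forall T, Phi (V n rho T) = g (INR (cntT n T) / INR n)) -> g 1 = g 0 ->
  is_max (Pnr n rho) Phi M -> is_max (fun m => (m <= n)%nat) (fun m => g (INR m / INR n)) M ->
  is_max (Gamma_n n rho) (fun b => Phi (Qbeta n rho b)) M.
Proof. intros Hr Hn Hext Hg Hg10 [_ HM1] [[ms [Hms Hv]] _].
  assert (1 <= INR n) by (apply (le_INR 1); lia).
  assert (Hvert : forall m, (m <= n)%nat -> Phi (Qbeta n rho (/ (INR m * rho + (INR n - INR m)))) = g (INR m / INR n)).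
  { intros m Hm. rewrite (Hext _ (V n rho (fun i => (i <=? m)%nat))) by (apply Qbeta_vertex; auto; lra).
    rewrite Hg, cntT_le_m. repeat f_equal; lia. }
  split.
  - destruct (Nat.eq_dec ms n) as [->|Hne].
    + exists (/ (INR 0 * rho + (INR n - INR 0))). split.
      * simpl. split; [apply Rinv_le_contravar; nra|]. rewrite Rmult_0_l, Rplus_0_l, Rminus_0_r; lra.
      * rewrite Hvert by lia. rewrite <- Hv. simpl. unfold Rdiv. rewrite Rmult_0_l, Rinv_r by lra. auto.
    + exists (/ (INR ms * rho + (INR n - INR ms))). split.
      * assert (INR ms <= INR n - 1) by (replace (INR n - 1) with (INR (n - 1)) by (rewrite minus_INR by lia; reflexivity); apply le_INR; lia).
        assert (0 <= INR ms) by apply pos_INR.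
        split; apply Rinv_le_contravar; nra.
      * rewrite Hvert by lia. auto.
  - intros b Hb. apply HM1. apply Pnr_iff; auto. apply Qbeta_Pn'; auto.
Qed.

Lemma gf_10 phi rho : 1 <= rho -> gf phi rho 1 = gf phi rho 0.
Proof. intros Hr. unfold gf. replace (rho / (1 + (rho - 1) * 1)) with 1 by (field; lra).
  replace (1 / (1 + (rho - 1) * 0)) with 1 by field. ring. Qed.

Lemma conv_side f x z w s y : convex_pos f -> 0 < x -> 0 < z -> w = 2 * x - z -> 0 < w -> 0 <= s <= 1 ->
  y = s * z + (1 - s) * x -> Rabs (f y - f x) <= s * (Rabs (f z - f x) + Rabs (f w - f x)).
Proof. intros Hf Hx Hz Hw Hw0 Hs Hy.
  assert (Hy0 : 0 < y) by (subst y; nra).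
  assert (H1 := Hf z x s Hz Hx Hs). rewrite <- Hy in H1.
  assert (Ht : 0 <= / (1 + s) <= 1) by (split; [left; apply Rinv_0_lt_compat; lra|
     rewrite <- Rinv_1; apply Rinv_le_contravar; lra]).
  assert (H2 := Hf y w (/ (1 + s)) Hy0 Hw0 Ht).
  replace (/ (1 + s) * y + (1 - / (1 + s)) * w) with x in H2 by (subst; field; lra).
  apply Rmult_le_compat_l with (r := 1 + s) in H2; [|lra].
  replace ((1 + s) * (/ (1 + s) * f y + (1 - / (1 + s)) * f w)) with (f y + s * f w) in H2 by (field; lra).
  assert (HA := Rle_abs (f z - f x)). assert (HA' := Rle_abs (- (f z - f x))). rewrite Rabs_Ropp in HA'.
  assert (HB := Rle_abs (f w - f x)). assert (HB' := Rle_abs (- (f w - f x))). rewrite Rabs_Ropp in HB'.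
  apply Rabs_le. split; nra.
Qed.

Lemma conv_cont f x : convex_pos f -> 0 < x -> continuity_pt f x.
Proof. intros Hf Hx. set (h := x / 2).
  set (C := Rabs (f (x + h) - f x) + Rabs (f (x - h) - f x)).
  assert (HC : 0 <= C) by (unfold C; assert (H1:=Rabs_pos (f (x + h) - f x)); assert (H2:=Rabs_pos (f (x - h) - f x)); lra).
  assert (Hh : 0 < h) by (unfold h; lra). assert (Hxh : x - h = h) by (unfold h; field).
  intros eps Heps. exists (Rmin h (eps * h / (C + 1))). split.
  { apply Rmin_glb_lt; auto. apply Rdiv_lt_0_compat; [nra|lra]. }
  intros y [[_ Hxy] Hd]. simpl in *. unfold R_dist in *.
  assert (Hd1 : Rabs (y - x) < h) by (eapply Rlt_le_trans; [apply Hd|apply Rmin_l]).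
  assert (Hd2 : Rabs (y - x) < eps * h / (C + 1)) by (eapply Rlt_le_trans; [apply Hd|apply Rmin_r]).
  set (s := Rabs (y - x) / h).
  assert (Hs : 0 <= s <= 1) by (unfold s; split; [apply Rmult_le_pos; [apply Rabs_pos|left; apply Rinv_0_lt_compat; lra]|
    apply Rmult_le_reg_r with h; [lra|]; unfold Rdiv; rewrite Rmult_assoc, Rinv_l; lra]).
  assert (Hb : Rabs (f y - f x) <= s * C).
  { destruct (Rle_dec x y).
    - unfold C. apply (conv_side f x (x + h) (x - h) s y Hf Hx); try lra.
      unfold s. rewrite Rabs_right by lra. field; lra.
    - replace C with (Rabs (f (x - h) - f x) + Rabs (f (x + h) - f x)) by (unfold C; ring).
      apply (conv_side f x (x - h) (x + h) s y Hf Hx); try lra.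
      unfold s. rewrite Rabs_left by lra. field; lra. }
  assert (s * (C + 1) < eps).
  { unfold s. apply Rmult_lt_compat_r with (r := (C + 1) / h) in Hd2; [|apply Rdiv_lt_0_compat; lra].
    replace (eps * h / (C + 1) * ((C + 1) / h)) with eps in Hd2 by (field; lra).
    replace (Rabs (y - x) / h * (C + 1)) with (Rabs (y - x) * ((C + 1) / h)) by (field; lra). auto. }
  assert (0 <= s) by lra. nra.
Qed.

Lemma cp_plus f g x : continuity_pt f x -> continuity_pt g x -> continuity_pt (fun y => f y + g y) x.
Proof. intros; apply (continuity_pt_plus f g); auto. Qed.
Lemma cp_minus f g x : continuity_pt f x -> continuity_pt g x -> continuity_pt (fun y => f y - g y) x.
Proof. intros; apply (continuity_pt_minus f g); auto. Qed.
Lemma cp_mult f g x : continuity_pt f x -> continuity_pt g x -> continuity_pt (fun y => f y * g y) x.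
Proof. intros; apply (continuity_pt_mult f g); auto. Qed.
Lemma cp_div f g x : continuity_pt f x -> continuity_pt g x -> g x <> 0 -> continuity_pt (fun y => f y / g y) x.
Proof. intros; apply (continuity_pt_div f g); auto. Qed.
Lemma cp_comp f g x : continuity_pt g x -> continuity_pt f (g x) -> continuity_pt (fun y => f (g y)) x.
Proof. intros; apply (continuity_pt_comp g f); auto. Qed.
Lemma cp_id x : continuity_pt (fun y => y) x.
Proof. apply derivable_continuous_pt, derivable_pt_id. Qed.
Lemma cp_const c x : continuity_pt (fun _ => c) x.
Proof. apply derivable_continuous_pt, derivable_pt_const. Qed.

Definition pcont (phi : R -> R) := forall t, 0 < t -> continuity_pt phi t.

Lemma gf_cont phi rho x : pcont phi -> 1 <= rho -> 0 <= x <= 1 -> continuity_pt (gf phi rho) x.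
Proof. intros Hp Hr Hx. unfold gf.
  assert (HD : continuity_pt (fun y => 1 + (rho - 1) * y) x) by (apply cp_plus; [apply cp_const|apply cp_mult; [apply cp_const|apply cp_id]]).
  assert (0 < 1 + (rho - 1) * x) by nra.
  apply cp_plus; apply cp_mult.
  - apply cp_id.
  - apply cp_comp. apply cp_div; [apply cp_const|auto|lra]. apply Hp. apply Rdiv_lt_0_compat; lra.
  - apply cp_minus; [apply cp_const|apply cp_id].
  - apply cp_comp. apply cp_div; [apply cp_const|auto|lra]. apply Hp. apply Rdiv_lt_0_compat; lra.
Qed.

Lemma fstar_cont f : pcont f -> pcont (fstar f).
Proof. intros Hf t Ht. unfold fstar. apply cp_mult; [apply cp_id|]. apply cp_comp.
  apply cp_div; [apply cp_const|apply cp_id|lra]. apply Hf. apply Rdiv_lt_0_compat; lra. Qed.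

Lemma gf_max phi rho : pcont phi -> 1 <= rho ->
  exists xs, 0 <= xs <= 1 /\ is_max unit_interval (gf phi rho) (gf phi rho xs).
Proof. intros Hp Hr. destruct (continuity_ab_maj (gf phi rho) 0 1 ltac:(lra)) as [xs [H1 H2]].
  intros; apply gf_cont; auto. exists xs; split; auto. split. exists xs; split; auto. intros y Hy; apply H1; auto. Qed.

Lemma fstar_conv f : convex_pos f -> convex_pos (fstar f).
Proof. intros Hf. apply (conv2 f 1 Hf); lra. Qed.

From Coquelicot Require Import Coquelicot.

Lemma uf_char f n rho : convex_pos f -> (1 <= n)%nat -> 1 <= rho ->
  is_max (Pnr n rho) (fun Q => Df f n Q (Un n)) (uf f n rho) /\
  is_max (fun m => (m <= n)%nat) (fun m => gf f rho (INR m / INR n)) (uf f n rho).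
Proof. intros Hf Hn Hr. destruct (u_struct f n rho Hf Hn Hr) as [M [H1 H2]].
  unfold uf. rewrite (maxval_eq _ _ M H1). auto. Qed.

Lemma vf_char f n rho : convex_pos f -> (1 <= n)%nat -> 1 <= rho ->
  is_max (Pnr n rho) (fun Q => Df f n (Un n) Q) (vf f n rho) /\
  is_max (fun m => (m <= n)%nat) (fun m => gf (fstar f) rho (INR m / INR n)) (vf f n rho).
Proof. intros Hf Hn Hr. destruct (v_struct f n rho Hf Hn Hr) as [M [H1 H2]].
  unfold vf. rewrite (maxval_eq _ _ M H1). auto. Qed.

Lemma grid k x : (1 <= k)%nat -> 0 <= x <= 1 ->
  exists m, (m <= k)%nat /\ INR m / INR k <= x /\ x - INR m / INR k < / INR k.
Proof. intros Hk Hx. assert (1 <= INR k) by (apply (le_INR 1); lia).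
  destruct (base_Int_part (INR k * x)) as [Hz1 Hz2].
  assert (Hz0 : (0 <= Int_part (INR k * x))%Z) by (assert (-1 < Int_part (INR k * x))%Z by (apply lt_IZR; simpl; nra); lia).
  set (m := Z.to_nat (Int_part (INR k * x))).
  assert (Hm : INR m = IZR (Int_part (INR k * x))) by (unfold m; rewrite INR_IZR_INZ, Z2Nat.id; auto).
  exists m. split; [|split].
  - apply INR_le. nra.
  - apply Rmult_le_reg_l with (INR k); [lra|]. unfold Rdiv. rewrite <- Rmult_assoc, (Rmult_comm (INR k)), Rmult_assoc, Rinv_r; lra.
  - apply Rmult_lt_reg_l with (INR k); [lra|]. rewrite Rinv_r by lra.
    replace (INR k * (x - INR m / INR k)) with (INR k * x - INR m) by (field; lra). lra.
Qed.

Lemma max_grid_bound phi rho n xs : pcont phi -> 1 <= rho -> (1 <= n)%nat ->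
  is_max unit_interval (gf phi rho) (gf phi rho xs) -> forall w,
  is_max (fun m => (m <= n)%nat) (fun m => gf phi rho (INR m / INR n)) w -> w <= gf phi rho xs.
Proof. intros Hp Hr Hn [_ Hmax] w [[m [Hm Hw]] _]. rewrite <- Hw. apply Hmax.
  assert (1 <= INR n) by (apply (le_INR 1); lia). assert (INR m <= INR n) by (apply le_INR; auto).
  assert (0 <= INR m) by apply pos_INR. split. apply Rdiv_le_0_compat; lra.
  apply Rmult_le_reg_r with (INR n); [lra|]. unfold Rdiv; rewrite Rmult_assoc, Rinv_l; lra. Qed.

Lemma grid_limit phi rho xs (w : nat -> R) : pcont phi -> 1 <= rho -> 0 <= xs <= 1 ->
  is_max unit_interval (gf phi rho) (gf phi rho xs) ->
  (forall k, (1 <= k)%nat -> is_max (fun m => (m <= k)%nat) (fun m => gf phi rho (INR m / INR k)) (w k)) ->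
  Un_cv w (gf phi rho xs).
Proof. intros Hp Hr Hxs Hmax Hw eps Heps.
  destruct (gf_cont phi rho xs Hp Hr Hxs eps Heps) as [del [Hdel Hc]].
  destruct (INR_archimed del 1 Hdel) as [N HN].
  exists (S N). intros k Hk. assert (Hk1 : (1 <= k)%nat) by lia.
  assert (HkN : INR (S N) <= INR k) by (apply le_INR; lia). rewrite S_INR in HkN.
  assert (H1 : 1 <= INR k) by (apply (le_INR 1); lia).
  destruct (grid k xs Hk1 Hxs) as [m [Hm [Hm1 Hm2]]].
  assert (Hub := max_grid_bound phi rho k xs Hp Hr Hk1 Hmax (w k) (Hw k Hk1)).
  destruct (Hw k Hk1) as [_ Hwm]. assert (Hlow := Hwm m Hm). simpl in Hlow.
  assert (Hclose : Rabs (gf phi rho (INR m / INR k) - gf phi rho xs) < eps).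
  { destruct (Req_dec (INR m / INR k) xs) as [->|Hne].
    - rewrite Rminus_diag, Rabs_R0; auto.
    - apply (Hc (INR m / INR k)). split. split; [exact I| intro E; apply Hne; auto]. simpl. unfold R_dist.
      rewrite Rabs_left1 by lra. assert (/ INR k < del).
      { apply Rmult_lt_reg_l with (INR k); [lra|]. rewrite Rinv_r by lra. nra. } lra. }
  unfold R_dist. apply Rabs_lt_between in Hclose. apply Rabs_lt_between. lra.
Qed.

Lemma hv_eq f rho x : 1 <= rho -> 0 <= x <= 1 -> gf (fstar f) rho x = hv f rho x.
Proof. intros Hr Hx. unfold gf, hv, fstar. set (D := 1 + (rho - 1) * x).
  assert (0 < D) by (unfold D; nra).
  replace (1 / (rho / D)) with (D / rho) by (field; lra).
  replace (1 / (1 / D)) with D by (field; lra). field; lra. Qed.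

Lemma mvt_up g K a b : a <= b ->
  (forall x, a < x < b -> exists d, derivable_pt_lim g x d /\ d <= K) ->
  (forall x, a <= x <= b -> continuity_pt g x) -> g b - g a <= K * (b - a).
Proof. intros Hab Hd Hc.
  set (df := fun x => Rmin K (ClassicalEpsilon.epsilon (inhabits 0) (fun d => derivable_pt_lim g x d /\ d <= K))).
  destruct (MVT_gen g a b df) as [c [Hc1 Hc2]].
  - rewrite Rmin_left, Rmax_right by auto. intros x Hx. apply is_derive_Reals.
    assert (Hs := ClassicalEpsilon.epsilon_spec (inhabits 0) (fun d => derivable_pt_lim g x d /\ d <= K) (Hd x Hx)).
    destruct Hs as [Hs1 Hs2]. unfold df. rewrite Rmin_right by auto. auto.
  - rewrite Rmin_left, Rmax_right by auto. auto.
  - rewrite Hc2. assert (df c <= K) by apply Rmin_l. nra.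
Qed.

Lemma mvt_abs g K a b : a <= b ->
  (forall x, a < x < b -> exists d, derivable_pt_lim g x d /\ Rabs d <= K) ->
  (forall x, a <= x <= b -> continuity_pt g x) -> Rabs (g b - g a) <= K * (b - a).
Proof. intros Hab Hd Hc. apply Rabs_le. split.
  - assert (H := mvt_up (fun x => - g x) K a b Hab). lapply H.
    + intros H1. lapply H1. intros; lra. intros x Hx. apply (continuity_pt_opp g); auto.
    + intros x Hx. destruct (Hd x Hx) as [d [H1 H2]]. exists (- d). split.
      apply (derivable_pt_lim_opp g); auto. apply Rabs_le_between in H2. lra.
  - apply mvt_up; auto. intros x Hx. destruct (Hd x Hx) as [d [H1 H2]]. exists d; split; auto.
    apply Rabs_le_between in H2; lra.
Qed.

Lemma part_f f n rho K : convex_pos f -> (2 <= n)%nat -> 1 <= rho -> 0 <= K ->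
  (forall x, 0 < x < 1 -> exists d, derivable_pt_lim (gf f rho) x d /\ d <= K) ->
  forall xs, 0 <= xs <= 1 -> is_max unit_interval (gf f rho) (gf f rho xs) ->
  0 <= gf f rho xs - uf f n rho /\ gf f rho xs - uf f n rho <= K / INR n.
Proof. intros Hf Hn Hr HK Hd xs Hxs Hmax.
  assert (Hp : pcont f) by (intros t Ht; apply conv_cont; auto).
  destruct (uf_char f n rho Hf ltac:(lia) Hr) as [_ Hu].
  assert (Hub := max_grid_bound f rho n xs Hp Hr ltac:(lia) Hmax _ Hu). split; [lra|].
  assert (H1 : 1 <= INR n) by (apply (le_INR 1); lia).
  destruct (grid n xs ltac:(lia) Hxs) as [m [Hm [Hm1 Hm2]]].
  destruct Hu as [_ Hu]. specialize (Hu m Hm). simpl in Hu.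
  assert (0 <= INR m / INR n) by (apply Rdiv_le_0_compat; [apply pos_INR|lra]).
  assert (HH := mvt_up (gf f rho) K (INR m / INR n) xs Hm1).
  lapply HH.
  - intros H2. lapply H2. intros H3.
    assert (K * (xs - INR m / INR n) <= K / INR n) by (unfold Rdiv at 2; apply Rmult_le_compat_l; lra). lra.
    intros x Hx. apply gf_cont; auto. lra.
  - intros x Hx. apply Hd. lra.
Qed.

Lemma ext_bound f f0 N y : convex_pos f -> lim_right0 f f0 -> 0 < N -> 0 < y <= N ->
  f y <= y / N * f N + (1 - y / N) * f0.
Proof. intros Hf Hl HN Hy. apply Rnot_lt_le. intros Hlt.
  set (gap := f y - (y / N * f N + (1 - y / N) * f0)).
  assert (Hg : 0 < gap) by (unfold gap; lra).
  destruct (Hl (gap / 2) ltac:(lra)) as [del [Hdel Hd]].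
  set (C := Rabs (f N - f0)). assert (HC : 0 <= C) by apply Rabs_pos.
  set (e := Rmin (Rmin (del / 2) (y / 2)) (N * gap / (4 * (C + 1)))).
  assert (He1 : e <= del / 2) by (unfold e; eapply Rle_trans; [apply Rmin_l|apply Rmin_l]).
  assert (He2 : e <= y / 2) by (unfold e; eapply Rle_trans; [apply Rmin_l|apply Rmin_r]).
  assert (He3 : e <= N * gap / (4 * (C + 1))) by (unfold e; apply Rmin_r).
  assert (He0 : 0 < e) by (unfold e; repeat apply Rmin_glb_lt; try lra; apply Rdiv_lt_0_compat; nra).
  set (s := (y - e) / (N - e)).
  assert (Hs : 0 <= s <= 1) by (unfold s; split; [apply Rdiv_le_0_compat; lra|
      apply Rmult_le_reg_r with (N - e); [lra|]; unfold Rdiv; rewrite Rmult_assoc, Rinv_l; lra]).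
  assert (Hc := Hf N e s HN He0 Hs).
  replace (s * N + (1 - s) * e) with y in Hc by (unfold s; field; lra).
  assert (Hfe := Hd e ltac:(lra)). apply Rabs_lt_between in Hfe.
  assert (Hsd : Rabs (s - y / N) <= 2 * e / N).
  { replace (s - y / N) with (- (e * (N - y) / (N * (N - e)))) by (unfold s; field; lra).
    rewrite Rabs_Ropp, Rabs_right.
    - apply Rmult_le_reg_r with (N * (N - e)). nra. unfold Rdiv.
      replace (e * (N - y) * / (N * (N - e)) * (N * (N - e))) with (e * (N - y)) by (field; lra).
      replace (2 * e * / N * (N * (N - e))) with (2 * e * (N - e)) by (field; lra). nra.
    - apply Rle_ge, Rdiv_le_0_compat; nra. }
  assert (Hprod : Rabs ((s - y / N) * (f N - f0)) <= 2 * e / N * C).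
  { rewrite Rabs_mult. apply Rmult_le_compat; [apply Rabs_pos|apply Rabs_pos|exact Hsd|right; reflexivity]. }
  assert (H2eC : 2 * e / N * C < gap / 2).
  { apply Rle_lt_trans with (2 * (N * gap / (4 * (C + 1))) / N * C).
    apply Rmult_le_compat_r; auto. unfold Rdiv; apply Rmult_le_compat_r; [left; apply Rinv_0_lt_compat; lra| lra].
    replace (2 * (N * gap / (4 * (C + 1))) / N * C) with (gap / 2 * (C / (C + 1))) by (field; lra).
    assert (C / (C + 1) < 1) by (apply Rmult_lt_reg_r with (C + 1); [lra|]; unfold Rdiv; rewrite Rmult_assoc, Rinv_l; lra).
    nra. }
  apply Rabs_le_between in Hprod.
  assert (E : s * f N + (1 - s) * f e - (y / N * f N + (1 - y / N) * f0) =
              (s - y / N) * (f N - f0) + (1 - s) * (f e - f0)) by ring.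
  assert ((1 - s) * (f e - f0) <= (1 - s) * (gap / 2)) by (apply Rmult_le_compat_l; lra).
  assert ((1 - s) * (gap / 2) <= gap / 2) by nra.
  unfold gap in *. lra.
Qed.

Lemma Pnr_entries n rho Q : (1 <= n)%nat -> Pnr n rho Q -> forall i, (1 <= i <= n)%nat -> 0 < Q i <= 1.
Proof. intros Hn HQ i Hi. apply Pnr_iff in HQ; auto. destruct HQ as [Hp [Hs _]]. split; auto.
  rewrite <- Hs. rewrite (rsum_diff1 n Q (fun k => if (k =? i)%nat then 0 else Q k) i Hi).
  rewrite Nat.eqb_refl. assert (0 <= rsum n (fun k => if (k =? i)%nat then 0 else Q k)).
  apply rsum_nonneg. intros k Hk. destruct (k =? i)%nat; [lra|left; auto]. lra.
  intros k _ Hk. destruct (Nat.eqb_spec k i); [lia|auto].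
Qed.

Lemma Df_U f n Q : Df f n Q (Un n) = rsum n (fun i => / INR n * f (INR n * Q i)).
Proof. unfold Df, Un. apply rsum_ext. intros i _. replace (Q i / / INR n) with (INR n * Q i) by (unfold Rdiv; rewrite Rinv_inv; ring). reflexivity. Qed.

Lemma u_le_Lu f f0 n rho : convex_pos f -> lim_right0 f f0 -> (1 <= n)%nat -> 1 <= rho ->
  uf f n rho <= (1 - / INR n) * f0 + f (INR n) / INR n.
Proof. intros Hf Hl Hn Hr. destruct (uf_char f n rho Hf Hn Hr) as [[[Q [HQ HQv]] _] _].
  assert (HN : 1 <= INR n) by (apply (le_INR 1); lia).
  rewrite <- HQv, Df_U.
  apply Rle_trans with (rsum n (fun i => / INR n * (Q i * f (INR n) + (1 - Q i) * f0))).
  - apply rsum_le. intros i Hi. apply Rmult_le_compat_l. left; apply Rinv_0_lt_compat; lra.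
    destruct (Pnr_entries n rho Q Hn HQ i Hi). 
    assert (Hb := ext_bound f f0 (INR n) (INR n * Q i) Hf Hl ltac:(lra) ltac:(split; nra)).
    replace (INR n * Q i / INR n) with (Q i) in Hb by (field; lra). auto.
  - apply Pnr_iff in HQ; auto. destruct HQ as [_ [Hs _]].
    rewrite (rsum_ext n _ (fun i => (/ INR n * (f (INR n) - f0)) * Q i + / INR n * f0)) by (intros; ring).
    rewrite rsum_plus, rsum_scal, rsum_const, Hs. right. field. lra.
Qed.

Lemma g1n f r N : 1 <= N -> 1 <= r ->
  gf f r (1 / N) = / N * f (r * N / (N + r - 1)) + (1 - / N) * f (N / (N + r - 1)).
Proof. intros HN Hr. unfold gf.
  replace (r / (1 + (r - 1) * (1 / N))) with (r * N / (N + r - 1)) by (field; lra).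
  replace (1 / (1 + (r - 1) * (1 / N))) with (N / (N + r - 1)) by (field; lra).
  replace (1 - 1 / N) with (1 - / N) by (field; lra). unfold Rdiv at 1. rewrite Rmult_1_l. auto. Qed.

Lemma uf_ge f n r : convex_pos f -> (2 <= n)%nat -> 1 <= r ->
  / INR n * f (r * INR n / (INR n + r - 1)) + (1 - / INR n) * f (INR n / (INR n + r - 1)) <= uf f n r.
Proof. intros Hf Hn Hr. destruct (uf_char f n r Hf ltac:(lia) Hr) as [_ [_ Hm]].
  assert (H := Hm 1%nat ltac:(lia)). simpl in H. rewrite g1n in H; auto. apply (le_INR 1); lia. Qed.

Lemma cont_at f x eps : continuity_pt f x -> 0 < eps -> exists del, 0 < del /\
  forall y, Rabs (y - x) < del -> Rabs (f y - f x) < eps.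
Proof. intros Hc He. destruct (Hc eps He) as [del [Hd H]]. exists del; split; auto.
  intros y Hy. destruct (Req_dec y x) as [->|Hne]. rewrite Rminus_diag, Rabs_R0; auto.
  apply (H y). split; [split; [exact I|intro; apply Hne; auto]|]. simpl; unfold R_dist; auto. Qed.

Lemma part_g1 f f0 n : convex_pos f -> (2 <= n)%nat -> lim_right0 f f0 ->
  lim_infty (fun r => uf f n r) ((1 - / INR n) * f0 + f (INR n) / INR n).
Proof. intros Hf Hn Hl eps Heps. set (N := INR n).
  assert (HN : 2 <= N) by (unfold N; apply (le_INR 2); lia).
  destruct (cont_at f N eps (conv_cont f N Hf ltac:(lra)) Heps) as [d1 [Hd1 Hc1]].
  destruct (Hl eps Heps) as [d0 [Hd0 Hc0]].
  exists (1 + N * N / d1 + N / d0). intros r Hr.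
  assert (0 < N * N / d1) by (apply Rdiv_lt_0_compat; nra).
  assert (0 < N / d0) by (apply Rdiv_lt_0_compat; nra).
  assert (Hr1 : 1 <= r) by lra.
  assert (Hrd1 : N * N < r * d1) by (apply Rle_lt_trans with (N * N / d1 * d1); [right; field; lra|]; apply Rmult_lt_compat_r; lra).
  assert (Hrd0 : N < r * d0) by (apply Rle_lt_trans with (N / d0 * d0); [right; field; lra|]; apply Rmult_lt_compat_r; lra).
  assert (Hup := u_le_Lu f f0 n r Hf Hl ltac:(lia) Hr1). fold N in Hup.
  assert (Hlo := uf_ge f n r Hf Hn Hr1). fold N in Hlo.
  set (D := N + r - 1) in *. assert (HD : r <= D) by (unfold D; lra).
  assert (Ha : Rabs (f (r * N / D) - f N) < eps).
  { apply Hc1. replace (r * N / D - N) with (- (N * (N - 1) / D)) by (unfold D; field; lra).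
    rewrite Rabs_Ropp, Rabs_right by (apply Rle_ge, Rdiv_le_0_compat; nra).
    apply Rmult_lt_reg_r with D; [lra|]. unfold Rdiv; rewrite Rmult_assoc, Rinv_l by lra. nra. }
  assert (Hb : Rabs (f (N / D) - f0) < eps).
  { apply Hc0. split. apply Rdiv_lt_0_compat; lra.
    apply Rmult_lt_reg_r with D; [lra|]. unfold Rdiv; rewrite Rmult_assoc, Rinv_l by lra. nra. }
  apply Rabs_lt_between in Ha. apply Rabs_lt_between in Hb. apply Rabs_lt_between.
  assert (0 < / N < 1) by (split; [apply Rinv_0_lt_compat; lra| rewrite <- Rinv_1; apply Rinv_lt_contravar; lra]).
  assert (/ N * (f (r * N / D) - f N) > / N * (- eps)) by (apply Rmult_lt_compat_l; lra).
  assert ((1 - / N) * (f (N / D) - f0) > (1 - / N) * (- eps)) by (apply Rmult_lt_compat_l; lra).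
  unfold Rdiv in *. split; nra.
Qed.

Lemma part_g2 f n : convex_pos f -> (2 <= n)%nat -> div_right0 f -> div_infty (fun r => uf f n r).
Proof. intros Hf Hn Hd A. set (N := INR n).
  assert (HN : 2 <= N) by (unfold N; apply (le_INR 2); lia).
  destruct (continuity_ab_min f 1 N ltac:(lra)) as [mn [Hmn _]].
  { intros c Hc. apply conv_cont; auto; lra. }
  set (B := f mn).
  assert (0 < / N < 1) by (split; [apply Rinv_0_lt_compat; lra| rewrite <- Rinv_1; apply Rinv_lt_contravar; lra]).
  destruct (Hd ((A - / N * B) / (1 - / N))) as [del [Hdel Hc]].
  exists (1 + N / del). intros r Hr.
  assert (0 < N / del) by (apply Rdiv_lt_0_compat; nra).
  assert (Hr1 : 1 <= r) by lra.
  assert (Hrd0 : N < r * del) by (apply Rle_lt_trans with (N / del * del); [right; field; lra|]; apply Rmult_lt_compat_r; lra).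
  assert (Hlo := uf_ge f n r Hf Hn Hr1). fold N in Hlo.
  set (D := N + r - 1) in *. assert (HD : r <= D) by (unfold D; lra).
  assert (Ha : B <= f (r * N / D)).
  { apply Hmn. split.
    - apply Rmult_le_reg_r with D; [lra|]. unfold Rdiv; rewrite Rmult_assoc, Rinv_l by lra. unfold D; nra.
    - apply Rmult_le_reg_r with D; [lra|]. unfold Rdiv; rewrite Rmult_assoc, Rinv_l by lra. unfold D; nra. }
  assert (Hb : (A - / N * B) / (1 - / N) < f (N / D)).
  { apply Hc. split. apply Rdiv_lt_0_compat; lra.
    apply Rmult_lt_reg_r with D; [lra|]. unfold Rdiv; rewrite Rmult_assoc, Rinv_l by lra. nra. }
  assert ((1 - / N) * ((A - / N * B) / (1 - / N)) < (1 - / N) * f (N / D)) by (apply Rmult_lt_compat_l; lra).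
  replace ((1 - / N) * ((A - / N * B) / (1 - / N))) with (A - / N * B) in H1 by (field; lra).
  assert (/ N * B <= / N * f (r * N / D)) by (apply Rmult_le_compat_l; lra).
  lra.
Qed.

Lemma lim_infty_unique F L1 L2 : lim_infty F L1 -> lim_infty F L2 -> L1 = L2.
Proof. intros H1 H2. apply NNPP. intros Hne.
  assert (He : 0 < Rabs (L1 - L2) / 2) by (apply Rdiv_lt_0_compat; [apply Rabs_pos_lt; lra|lra]).
  destruct (H1 _ He) as [M1 HM1]. destruct (H2 _ He) as [M2 HM2].
  specialize (HM1 (Rmax M1 M2) (Rmax_l _ _)). specialize (HM2 (Rmax M1 M2) (Rmax_r _ _)).
  assert (Rabs (L1 - L2) <= Rabs (F (Rmax M1 M2) - L1) + Rabs (F (Rmax M1 M2) - L2)).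
  { replace (L1 - L2) with (- (F (Rmax M1 M2) - L1) + (F (Rmax M1 M2) - L2)) by ring.
    rewrite <- (Rabs_Ropp (F (Rmax M1 M2) - L1)). apply Rabs_triang. }
  lra.
Qed.

Lemma part_g3 f n rho f0 : convex_pos f -> (2 <= n)%nat -> 1 <= rho -> lim_right0 f f0 ->
  (forall t, 0 < t < INR n -> exists d, derivable_pt_lim f t d) ->
  forall Kn, is_lub (fun y => exists t d, 0 < t < INR n /\ derivable_pt_lim f t d /\ y = Rabs d) Kn ->
  forall Lu, lim_infty (fun r => uf f n r) Lu ->
  0 <= Lu - uf f n rho /\ Lu - uf f n rho <= 2 * Kn * (INR n - 1) / (INR n + rho - 1).
Proof. intros Hf Hn Hr Hl Hder Kn [HKub _] Lu HLu.
  rewrite <- (lim_infty_unique _ _ _ (part_g1 f f0 n Hf Hn Hl) HLu).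
  set (N := INR n). assert (HN : 2 <= N) by (unfold N; apply (le_INR 2); lia).
  assert (Hup := u_le_Lu f f0 n rho Hf Hl ltac:(lia) Hr). fold N in Hup.
  split; [lra|].
  assert (Hdb : forall t, 0 < t < N -> exists d, derivable_pt_lim f t d /\ Rabs d <= Kn).
  { intros t Ht. destruct (Hder t Ht) as [d Hd]. exists d; split; auto. apply HKub. exists t, d; auto. }
  assert (HK0 : 0 <= Kn) by (destruct (Hdb 1 ltac:(lra)) as [d [_ Hd]]; assert (H := Rabs_pos d); lra).
  assert (Hcont : forall x, 0 < x -> continuity_pt f x) by (intros; apply conv_cont; auto).
  assert (Hlo := uf_ge f n rho Hf Hn Hr). fold N in Hlo.
  set (D := N + rho - 1) in *. assert (HD : rho <= D) by (unfold D; lra).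
  set (a := rho * N / D) in *. set (b := N / D) in *.
  assert (Ha : 1 <= a <= N).
  { unfold a. split.
    - apply Rmult_le_reg_r with D; [lra|]. unfold Rdiv; rewrite Rmult_assoc, Rinv_l by lra. unfold D; nra.
    - apply Rmult_le_reg_r with D; [lra|]. unfold Rdiv; rewrite Rmult_assoc, Rinv_l by lra. unfold D; nra. }
  assert (Hb : 0 < b <= 1).
  { unfold b. split. apply Rdiv_lt_0_compat; lra.
    apply Rmult_le_reg_r with D; [lra|]. unfold Rdiv; rewrite Rmult_assoc, Rinv_l by lra. unfold D; nra. }
  assert (H1 : Rabs (f N - f a) <= Kn * (N - a)).
  { apply mvt_abs. lra. intros x Hx. apply Hdb. lra. intros x Hx. apply Hcont. lra. }
  assert (H2 : Rabs (f0 - f b) <= Kn * b).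
  { apply Rnot_lt_le. intros Hlt. set (eta := Rabs (f0 - f b) - Kn * b).
    destruct (Hl eta ltac:(unfold eta; lra)) as [d0 [Hd0 Hc0]].
    set (t := Rmin (d0 / 2) (b / 2)).
    assert (Ht1 : t <= d0 / 2) by apply Rmin_l. assert (Ht2 : t <= b / 2) by apply Rmin_r.
    assert (Ht0 : 0 < t) by (apply Rmin_glb_lt; lra).
    assert (Hft := Hc0 t ltac:(lra)).
    assert (Hm : Rabs (f b - f t) <= Kn * (b - t)).
    { apply mvt_abs. lra. intros x Hx. apply Hdb. lra. intros x Hx. apply Hcont. lra. }
    assert (Rabs (f0 - f b) <= Rabs (f t - f0) + Rabs (f b - f t)).
    { replace (f0 - f b) with (- (f t - f0) + - (f b - f t)) by ring.
      eapply Rle_trans; [apply Rabs_triang|]. rewrite !Rabs_Ropp. lra. }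
    assert (Kn * (b - t) <= Kn * b) by (apply Rmult_le_compat_l; lra).
    unfold eta in *. lra. }
  apply Rabs_le_between in H1. apply Rabs_le_between in H2.
  assert (0 < / N < 1) by (split; [apply Rinv_0_lt_compat; lra| rewrite <- Rinv_1; apply Rinv_lt_contravar; lra]).
  assert (/ N * (f N - f a) <= / N * (Kn * (N - a))) by (apply Rmult_le_compat_l; lra).
  assert ((1 - / N) * (f0 - f b) <= (1 - / N) * (Kn * b)) by (apply Rmult_le_compat_l; lra).
  assert (E : / N * (Kn * (N - a)) + (1 - / N) * (Kn * b) = 2 * Kn * (N - 1) / D)
    by (unfold a, b, D; field; lra).
  unfold Rdiv in *. lra.
Qed.

Lemma taylor_low f f1 f2 m lo hi :
  (forall t, lo <= t <= hi -> derivable_pt_lim f t (f1 t) /\ derivable_pt_lim f1 t (f2 t)) ->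
  lo <= 1 <= hi -> (forall t, lo <= t <= hi -> m <= f2 t) ->
  forall t, lo <= t <= hi -> f 1 + f1 1 * (t - 1) + m / 2 * (t - 1) ^ 2 <= f t.
Proof. intros Hd H1 Hm t Ht.
  set (h1 := fun y => f1 y - m * y).
  assert (Hh1 : forall y, lo <= y <= hi -> derivable_pt_lim h1 y (f2 y - m)).
  { intros y Hy. apply is_derive_Reals. unfold h1. apply (is_derive_minus f1 (fun y => m * y)).
    apply is_derive_Reals, Hd; auto. auto_derive; auto; ring. }
  assert (Hmono : forall x y, lo <= x -> x <= y -> y <= hi -> h1 x <= h1 y).
  { intros x y Hx Hxy Hy. destruct (Req_dec x y) as [->|Hne]; [lra|].
    destruct (MVT_cor2 h1 (fun y => f2 y - m) x y ltac:(lra)) as [c [Hc1 Hc2]].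
    intros c Hc; apply Hh1; lra. assert (m <= f2 c) by (apply Hm; lra). nra. }
  set (h0 := fun y => f y - f1 1 * y - m / 2 * (y - 1) ^ 2).
  assert (Hh0 : forall y, lo <= y <= hi -> derivable_pt_lim h0 y (h1 y - h1 1)).
  { intros y Hy. apply is_derive_Reals. unfold h0, h1.
    assert (Hq : is_derive (fun y => f1 1 * y + m / 2 * (y - 1) ^ 2) y (f1 1 + m * (y - 1))).
    { auto_derive; [exact I|field]. }
    assert (Hf : is_derive f y (f1 y)) by (apply is_derive_Reals, Hd; auto).
    assert (H := is_derive_minus _ _ _ _ _ Hf Hq).
    replace (f1 y - m * y - (f1 1 - m * 1)) with (minus (f1 y) (f1 1 + m * (y - 1)))
      by (unfold minus, plus, opp; simpl; ring).
    eapply is_derive_ext; [|exact H]. intros; simpl; unfold minus, plus, opp; simpl; ring. }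
  assert (Hge : h0 1 <= h0 t).
  { destruct (Rtotal_order t 1) as [Hlt|[Heq|Hgt]].
    - destruct (MVT_cor2 h0 (fun y => h1 y - h1 1) t 1 Hlt) as [c [Hc1 Hc2]].
      intros c Hc; apply Hh0; lra. assert (h1 c <= h1 1) by (apply Hmono; lra). nra.
    - subst; lra.
    - destruct (MVT_cor2 h0 (fun y => h1 y - h1 1) 1 t Hgt) as [c [Hc1 Hc2]].
      intros c Hc; apply Hh0; lra. assert (h1 1 <= h1 c) by (apply Hmono; lra). nra. }
  unfold h0 in Hge. simpl in Hge. lra.
Qed.

Lemma taylor_up f f1 f2 M lo hi :
  (forall t, lo <= t <= hi -> derivable_pt_lim f t (f1 t) /\ derivable_pt_lim f1 t (f2 t)) ->
  lo <= 1 <= hi -> (forall t, lo <= t <= hi -> f2 t <= M) ->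
  forall t, lo <= t <= hi -> f t <= f 1 + f1 1 * (t - 1) + M / 2 * (t - 1) ^ 2.
Proof. intros Hd H1 HM t Ht.
  assert (H := taylor_low (fun y => - f y) (fun y => - f1 y) (fun y => - f2 y) (- M) lo hi).
  lapply H. intros H2. lapply H2; auto. intros H3. lapply H3. intros H4. specialize (H4 t Ht). lra.
  intros y Hy; specialize (HM y Hy); lra.
  intros y Hy; destruct (Hd y Hy); split; apply (derivable_pt_lim_opp); auto.
Qed.

Lemma rsum_quad n Q c0 c1 c2 : (1 <= n)%nat -> rsum n Q = 1 ->
  rsum n (fun i => / INR n * (c0 + c1 * (INR n * Q i - 1) + c2 * (INR n * Q i - 1) ^ 2)) =
  c0 + c2 * (INR n * rsum n (fun i => Q i ^ 2) - 1).
Proof. intros Hn Hs. assert (1 <= INR n) by (apply (le_INR 1); lia).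
  rewrite (rsum_ext n _ (fun i => (/ INR n * (c0 - c1 + c2) + (c1 - 2 * c2) * Q i) + c2 * INR n * Q i ^ 2))
    by (intros; field; lra).
  rewrite rsum_plus, rsum_plus, rsum_const, rsum_scal, rsum_scal, Hs. field; lra. Qed.

Lemma norm2_sq n Q : norm2 n Q ^ 2 = rsum n (fun i => Q i ^ 2).
Proof. unfold norm2. apply pow2_sqrt. apply rsum_nonneg. intros; apply pow2_ge_0. Qed.

Lemma Pnr_nQ n rho Q : (1 <= n)%nat -> Pnr n rho Q -> forall i, (1 <= i <= n)%nat -> / rho <= INR n * Q i <= rho.
Proof. intros Hn HQ i Hi. apply Pnr_iff in HQ; auto. destruct HQ as [Hp [Hs Hr]].
  assert (A1 : rsum n (fun _ => Q i) <= rsum n (fun j => rho * Q j)) by (apply rsum_le; intros; apply Hr; auto).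
  assert (A2 : rsum n Q <= rsum n (fun _ => rho * Q i)) by (apply rsum_le; intros; apply Hr; auto).
  rewrite rsum_const in A1, A2. rewrite rsum_scal, Hs in A1. rewrite Hs in A2.
  assert (Hqi := Hp i Hi). assert (Hii := Hr i i Hi Hi). assert (0 < rho) by nra. split; [|lra].
  apply Rmult_le_reg_l with rho; [lra|]. rewrite Rinv_r by lra. lra. Qed.

Lemma chi2_conv : convex_pos chi2.
Proof. intros x y t Hx Hy Ht. unfold chi2.
  assert (0 <= t * (1 - t) * (x - y) ^ 2) by (apply Rmult_le_pos; [nra|apply pow2_ge_0]). nra. Qed.

Lemma chi2_eq n Q : (1 <= n)%nat -> rsum n Q = 1 -> Df chi2 n Q (Un n) = INR n * norm2 n Q ^ 2 - 1.
Proof. intros Hn Hs. rewrite Df_U, norm2_sq.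
  replace (INR n * rsum n (fun i => Q i ^ 2) - 1) with (0 + 1 * (INR n * rsum n (fun i => Q i ^ 2) - 1)) by ring.
  rewrite <- (rsum_quad n Q 0 0 1 Hn Hs). apply rsum_ext. intros; unfold chi2; ring. Qed.

Lemma gchi_bound rho x : 1 <= rho -> 0 <= x <= 1 -> gf chi2 rho x <= (rho - 1) ^ 2 / (4 * rho).
Proof. intros Hr Hx. unfold gf, chi2. set (D := 1 + (rho - 1) * x). assert (HD : 1 <= D) by (unfold D; nra).
  replace (x * (rho / D - 1) ^ 2 + (1 - x) * (1 / D - 1) ^ 2) with ((rho - 1) ^ 2 * (x * (1 - x)) / D ^ 2)
    by (assert (HD0 : D <> 0) by lra; unfold D in *; field; auto).
  apply Rmult_le_reg_r with (4 * rho * D ^ 2). nra.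
  replace ((rho - 1) ^ 2 * (x * (1 - x)) / D ^ 2 * (4 * rho * D ^ 2)) with ((rho - 1) ^ 2 * (4 * rho * x * (1 - x))) by (field; lra).
  replace ((rho - 1) ^ 2 / (4 * rho) * (4 * rho * D ^ 2)) with ((rho - 1) ^ 2 * D ^ 2) by (field; lra).
  apply Rmult_le_compat_l. apply pow2_ge_0.
  assert (D ^ 2 - 4 * rho * x * (1 - x) = (1 - (rho + 1) * x) ^ 2) by (unfold D; ring).
  assert (0 <= (1 - (rho + 1) * x) ^ 2) by apply pow2_ge_0. lra.
Qed.

Lemma chi_bound n rho Q : (1 <= n)%nat -> 1 <= rho -> Pnr n rho Q -> INR n * norm2 n Q ^ 2 - 1 <= (rho - 1) ^ 2 / (4 * rho).
Proof. intros Hn Hr HQ. destruct (uf_char chi2 n rho chi2_conv Hn Hr) as [[_ Hmax] [[m [Hm Hv]] _]].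
  assert (HQ' := HQ). apply Pnr_iff in HQ'; auto. destruct HQ' as [_ [Hs _]].
  rewrite <- chi2_eq by auto. eapply Rle_trans; [apply Hmax; auto|]. rewrite <- Hv. apply gchi_bound; auto.
  assert (1 <= INR n) by (apply (le_INR 1); lia). assert (INR m <= INR n) by (apply le_INR; auto).
  assert (0 <= INR m) by apply pos_INR. split. apply Rdiv_le_0_compat; lra.
  apply Rmult_le_reg_r with (INR n); [lra|]. unfold Rdiv; rewrite Rmult_assoc, Rinv_l; lra.
Qed.

Lemma nsq_ge1 n Q : (1 <= n)%nat -> rsum n Q = 1 -> 1 <= INR n * rsum n (fun i => Q i ^ 2).
Proof. intros Hn Hs. assert (1 <= INR n) by (apply (le_INR 1); lia).
  assert (HH := rsum_quad n Q 0 0 1 Hn Hs).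
  assert (0 <= rsum n (fun i => / INR n * (0 + 0 * (INR n * Q i - 1) + 1 * (INR n * Q i - 1) ^ 2))).
  { apply rsum_nonneg. intros. apply Rmult_le_pos. left; apply Rinv_0_lt_compat; lra.
    assert (H1 := pow2_ge_0 (INR n * Q i - 1)). lra. }
  lra. Qed.

Lemma part_h f n rho : convex_pos f -> f 1 = 0 -> (1 <= n)%nat -> 1 <= rho ->
  forall f1 f2 m M, twice_diff_pos f f1 f2 -> 0 <= m ->
      (forall t, / rho <= t <= rho -> m <= f2 t <= M) ->
      forall Q, Pnr n rho Q ->
        0 <= / 2 * m * (INR n * norm2 n Q ^ 2 - 1) /\
        / 2 * m * (INR n * norm2 n Q ^ 2 - 1) <= Df f n Q (Un n) /\
        Df f n Q (Un n) <= / 2 * M * (INR n * norm2 n Q ^ 2 - 1) /\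
        / 2 * M * (INR n * norm2 n Q ^ 2 - 1) <= M * (rho - 1) ^ 2 / (8 * rho).
Proof. intros Hf Hf1 Hn Hr f1 f2 m M Htd Hm Hb Q HQ.
  assert (HQ' := HQ). apply Pnr_iff in HQ'; auto. destruct HQ' as [_ [Hs _]].
  assert (Hir : / rho <= 1) by (rewrite <- Rinv_1; apply Rinv_le_contravar; lra).
  assert (Hirp : 0 < / rho) by (apply Rinv_0_lt_compat; lra).
  assert (Hd : forall t, / rho <= t <= rho -> derivable_pt_lim f t (f1 t) /\ derivable_pt_lim f1 t (f2 t))
    by (intros t Ht; apply Htd; lra).
  assert (1 <= INR n) by (apply (le_INR 1); lia).
  assert (Hn1 := nsq_ge1 n Q Hn Hs). rewrite <- norm2_sq in Hn1.
  assert (HmM : m <= M) by (destruct (Hb 1 ltac:(lra)); lra).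
  split; [|split; [|split]].
  - apply Rmult_le_pos; lra.
  - rewrite Df_U. rewrite norm2_sq. 
    replace (/ 2 * m * (INR n * rsum n (fun i => Q i ^ 2) - 1)) with (f 1 + m / 2 * (INR n * rsum n (fun i => Q i ^ 2) - 1)) by (rewrite Hf1; field).
    rewrite <- (rsum_quad n Q (f 1) (f1 1) (m / 2) Hn Hs). apply rsum_le. intros i Hi.
    apply Rmult_le_compat_l. left; apply Rinv_0_lt_compat; lra.
    apply (taylor_low f f1 f2 m (/ rho) rho Hd); [lra| intros t Ht; apply Hb; auto| apply (Pnr_nQ n rho Q); auto].
  - rewrite Df_U. rewrite norm2_sq.
    replace (/ 2 * M * (INR n * rsum n (fun i => Q i ^ 2) - 1)) with (f 1 + M / 2 * (INR n * rsum n (fun i => Q i ^ 2) - 1)) by (rewrite Hf1; field).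
    rewrite <- (rsum_quad n Q (f 1) (f1 1) (M / 2) Hn Hs). apply rsum_le. intros i Hi.
    apply Rmult_le_compat_l. left; apply Rinv_0_lt_compat; lra.
    apply (taylor_up f f1 f2 M (/ rho) rho Hd); [lra| intros t Ht; apply Hb; auto| apply (Pnr_nQ n rho Q); auto].
  - assert (Hc := chi_bound n rho Q Hn Hr HQ).
    apply Rmult_le_compat_l with (r := / 2 * M) in Hc; [|lra].
    replace (/ 2 * M * ((rho - 1) ^ 2 / (4 * rho))) with (M * (rho - 1) ^ 2 / (8 * rho)) in Hc by (field; lra). auto.
Qed.

Lemma part_h2 n rho Q : (1 <= n)%nat -> Pnr n rho Q -> Df chi2 n Q (Un n) = INR n * norm2 n Q ^ 2 - 1.
Proof. intros Hn HQ. apply Pnr_iff in HQ; auto. destruct HQ as [_ [Hs _]]. apply chi2_eq; auto. Qed.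

Lemma part_i f n rho : convex_pos f -> f 1 = 0 -> (1 <= n)%nat -> 1 <= rho ->
  forall d f1 f2 Mf, 0 < d -> 0 < Mf -> twice_diff_pos f f1 f2 ->
     (forall t, 0 < t -> f2 t <= Mf) ->
     rho <= 1 + 4 * d / Mf + sqrt (8 * d / Mf + 16 * d ^ 2 / Mf ^ 2) ->
     forall Q, Pnr n rho Q -> Df f n Q (Un n) <= d.
Proof. intros Hf Hf1 Hn Hr d f1 f2 Mf Hd HM Htd Hb Hrho Q HQ.
  assert (HQ' := HQ). apply Pnr_iff in HQ'; auto. destruct HQ' as [_ [Hs _]].
  assert (1 <= INR n) by (apply (le_INR 1); lia).
  assert (Hup : Df f n Q (Un n) <= / 2 * Mf * (INR n * norm2 n Q ^ 2 - 1)).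
  { rewrite Df_U. rewrite norm2_sq.
    replace (/ 2 * Mf * (INR n * rsum n (fun i => Q i ^ 2) - 1)) with (f 1 + Mf / 2 * (INR n * rsum n (fun i => Q i ^ 2) - 1)) by (rewrite Hf1; field).
    rewrite <- (rsum_quad n Q (f 1) (f1 1) (Mf / 2) Hn Hs). apply rsum_le. intros i Hi.
    apply Rmult_le_compat_l. left; apply Rinv_0_lt_compat; lra.
    assert (Hq := Pnr_nQ n rho Q Hn HQ i Hi).
    assert (Hirp : 0 < / rho) by (apply Rinv_0_lt_compat; lra).
    set (t := INR n * Q i) in *.
    apply (taylor_up f f1 f2 Mf (Rmin t 1) (Rmax t 1)).
    - intros y Hy. apply Htd. assert (Rmin t 1 > 0) by (apply Rmin_glb_lt; lra). lra.
    - split; [apply Rmin_r|apply Rmax_r].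
    - intros y Hy. apply Hb. assert (Rmin t 1 > 0) by (apply Rmin_glb_lt; lra). lra.
    - split; [apply Rmin_l|apply Rmax_l]. }
  assert (Hc := chi_bound n rho Q Hn Hr HQ).
  apply Rmult_le_compat_l with (r := / 2 * Mf) in Hc; [|lra].
  set (a := 4 * d / Mf) in *. assert (Ha : 0 < a) by (unfold a; apply Rdiv_lt_0_compat; lra).
  replace (8 * d / Mf + 16 * d ^ 2 / Mf ^ 2) with (2 * a + a ^ 2) in Hrho by (unfold a; field; lra).
  set (s := sqrt (2 * a + a ^ 2)) in *.
  assert (Hs0 : 0 <= s) by apply sqrt_pos.
  assert (Hs2 : s ^ 2 = 2 * a + a ^ 2) by (apply pow2_sqrt; nra).
  assert (Hsa : a <= s) by nra.
  assert (Hy : (rho - 1) ^ 2 <= 2 * a * rho).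
  { assert ((rho - 1 - a - s) * (rho - 1 - a + s) <= 0).
    { apply Rmult_le_0_r; lra. }
    nra. }
  assert (/ 2 * Mf * ((rho - 1) ^ 2 / (4 * rho)) <= d).
  { apply Rmult_le_reg_r with (8 * rho). lra.
    replace (/ 2 * Mf * ((rho - 1) ^ 2 / (4 * rho)) * (8 * rho)) with (Mf * (rho - 1) ^ 2) by (field; lra).
    apply Rle_trans with (Mf * (2 * a * rho)). apply Rmult_le_compat_l; lra.
    unfold a. right; field; lra. }
  lra.
Qed.

Lemma sinc_mono (phi : nat -> nat) : (forall k, (phi k < phi (S k))%nat) -> forall a b, (a < b)%nat -> (phi a < phi b)%nat.
Proof. intros H a b Hab. induction b; [lia|]. destruct (Nat.eq_dec a b) as [->|]; auto.
  specialize (IHb ltac:(lia)). specialize (H b). lia. Qed.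

Lemma sinc_ge (phi : nat -> nat) : (forall k, (phi k < phi (S k))%nat) -> forall k, (k <= phi k)%nat.
Proof. intros H k. induction k; [lia|]. specialize (H k). lia. Qed.

Lemma cv_subseq u l (psi : nat -> nat) : Un_cv u l -> (forall k, (psi k < psi (S k))%nat) -> Un_cv (fun k => u (psi k)) l.
Proof. intros Hu Hp eps He. destruct (Hu eps He) as [N HN]. exists N. intros k Hk. apply HN.
  assert (H := sinc_ge psi Hp k). lia. Qed.

Lemma subseq1 (u : nat -> R) : (forall k, 0 <= u k <= 1) ->
  exists psi l, (forall k, (psi k < psi (S k))%nat) /\ Un_cv (fun k => u (psi k)) l.
Proof. intros Hb. destruct (Bolzano_Weierstrass u (fun c => 0 <= c <= 1) (compact_P3 0 1) Hb) as [l Hl].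
  assert (Hsel : forall N k, exists p, (N <= p)%nat /\ Rabs (u p - l) < / INR (S k)).
  { intros N k. assert (Hpos : 0 < / INR (S k)) by (apply Rinv_0_lt_compat, lt_0_INR; lia).
    destruct (Hl (fun y => Rabs (y - l) < / INR (S k)) N) as [p [Hp1 Hp2]].
    exists (mkposreal _ Hpos). intros y Hy. auto. exists p; auto. }
  set (sel := fun N k => epsilon (inhabits 0%nat) (fun p => (N <= p)%nat /\ Rabs (u p - l) < / INR (S k))).
  assert (Hs : forall N k, (N <= sel N k)%nat /\ Rabs (u (sel N k) - l) < / INR (S k))
    by (intros N k; unfold sel; apply epsilon_spec; apply Hsel).
  set (psi := fix psi (k : nat) : nat := match k with O => sel O O | S j => sel (S (psi j)) (S j) end).
  exists psi, l. split.
  - intros k. simpl. destruct (Hs (S (psi k)) (S k)). lia.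
  - intros eps He. destruct (INR_archimed eps 1 He) as [N HN]. exists N. intros k Hk.
    unfold R_dist. assert (Hk' : Rabs (u (psi k) - l) < / INR (S k)) by (destruct k; simpl; apply Hs).
    assert (INR N <= INR (S k)) by (apply le_INR; lia).
    assert (/ INR (S k) <= / INR N) by (apply Rinv_le_contravar; [apply lt_0_INR; destruct N; simpl in HN; [lra|lia]|auto]).
    assert (0 < INR N) by (destruct N; simpl in HN; [lra| apply lt_0_INR; lia]).
    assert (/ INR N < eps) by (apply Rmult_lt_reg_l with (INR N); [lra|]; rewrite Rinv_r by lra; lra).
    lra.
Qed.

Lemma subseq_n n (Qs : nat -> nat -> R) : (forall k i, (1 <= i <= n)%nat -> 0 <= Qs k i <= 1) ->
  exists phi L, (forall k, (phi k < phi (S k))%nat) /\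
    forall i, (1 <= i <= n)%nat -> Un_cv (fun k => Qs (phi k) i) (L i).
Proof. induction n; intros Hb.
  - exists (fun k => k), (fun _ => 0). split; [intros; lia|intros; lia].
  - destruct IHn as [phi [L [Hphi HL]]]. intros k i Hi; apply Hb; lia.
    destruct (subseq1 (fun k => Qs (phi k) (S n))) as [psi [l [Hpsi Hl]]]. intros k; apply Hb; lia.
    exists (fun k => phi (psi k)), (fun i => if (i =? S n)%nat then l else L i). split.
    + intros k. apply sinc_mono; auto.
    + intros i Hi. destruct (Nat.eqb_spec i (S n)) as [->|]; auto.
      apply (cv_subseq (fun k => Qs (phi k) i)); auto. apply HL; lia.
Qed.

Lemma cv_le_const u l a : Un_cv u l -> (forall k, a <= u k) -> a <= l.
Proof. intros Hu H. apply (Rle_cv_lim (Un := fun _ => a) (Vn := u)); auto.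
  intros e He; exists O; intros; rewrite R_dist_eq; auto. Qed.

Lemma part_a_compact n rho : (1 <= n)%nat -> 1 <= rho -> seq_compact n (Pnr n rho).
Proof. intros Hn Hr Qs HQs.
  assert (Hb : forall k i, (1 <= i <= n)%nat -> 0 <= Qs k i <= 1).
  { intros k i Hi. specialize (HQs k). apply Pnr_iff in HQs; auto. destruct HQs as [Hp [Hs _]].
    split. left; auto. rewrite <- Hs. rewrite (rsum_diff1 n (Qs k) (fun j => if (j =? i)%nat then 0 else Qs k j) i Hi).
    rewrite Nat.eqb_refl. assert (0 <= rsum n (fun j => if (j =? i)%nat then 0 else Qs k j)).
    apply rsum_nonneg. intros j Hj. destruct (j =? i)%nat; [lra|left; auto]. lra.
    intros j _ Hj. destruct (Nat.eqb_spec j i); [lia|auto]. }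
  destruct (subseq_n n Qs Hb) as [phi [L [Hphi HL]]].
  exists phi, L. split; auto. split; auto.
  assert (1 <= INR n) by (apply (le_INR 1); lia).
  apply Pnr_iff; auto. split; [|split].
  - intros i Hi. apply Rlt_le_trans with (/ (INR n * rho)). apply Rinv_0_lt_compat; nra.
    apply (cv_le_const _ _ _ (HL i Hi)). intros k. apply (Pn'_lower n rho); auto. apply Pnr_iff; auto.
  - apply (UL_sequence (fun k => rsum n (Qs (phi k)))). apply rsum_lim; auto.
    intros e He; exists O; intros k _. assert (H1 := HQs (phi k)). apply Pnr_iff in H1; auto.
    destruct H1 as [_ [Hs _]]. rewrite Hs. rewrite R_dist_eq; auto.
  - intros i j Hi Hj. assert (Hc : Un_cv (fun k => rho * Qs (phi k) j - Qs (phi k) i) (rho * L j - L i)).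
    { apply CV_minus; auto. apply CV_mult; auto. intros e He; exists O; intros; rewrite R_dist_eq; auto. }
    assert (0 <= rho * L j - L i). apply (cv_le_const _ _ _ Hc). intros k.
    assert (H1 := HQs (phi k)). apply Pnr_iff in H1; auto. destruct H1 as [_ [_ Hr']].
    specialize (Hr' i j Hi Hj). lra. lra.
Qed.

Lemma part_a_convex n rho : (1 <= n)%nat -> convex_set (Pnr n rho).
Proof. intros Hn P Q t HP HQ Ht. apply Pnr_iff in HP; auto. apply Pnr_iff in HQ; auto. apply Pnr_iff; auto.
  destruct HP as [Pp [Ps Pr]]. destruct HQ as [Qp [Qs Qr]]. split; [|split].
  - intros i Hi. specialize (Pp i Hi); specialize (Qp i Hi).
    destruct (Req_dec t 0) as [->|]; [lra|]. assert (0 < t * P i) by (apply Rmult_lt_0_compat; lra).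
    assert (0 <= (1 - t) * Q i) by (apply Rmult_le_pos; lra). lra.
  - rewrite rsum_plus, !rsum_scal, Ps, Qs. ring.
  - intros i j Hi Hj. specialize (Pr i j Hi Hj); specialize (Qr i j Hi Hj).
    assert (t * P i <= t * (rho * P j)) by (apply Rmult_le_compat_l; lra).
    assert ((1 - t) * Q i <= (1 - t) * (rho * Q j)) by (apply Rmult_le_compat_l; lra). lra.
Qed.

Lemma Df_ext1 f n Q P P' : (forall i, (1 <= i <= n)%nat -> P i = P' i) -> Df f n P Q = Df f n P' Q.
Proof. intros H. apply rsum_ext. intros i Hi. rewrite H; auto. Qed.
Lemma Df_ext2 f n Q P P' : (forall i, (1 <= i <= n)%nat -> P i = P' i) -> Df f n Q P = Df f n Q P'.
Proof. intros H. apply rsum_ext. intros i Hi. rewrite H; auto. Qed.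

Theorem theorem7 (f : R -> R) (n : nat) (rho : R)
  (Hconv : convex_pos f) (Hf1 : f 1 = 0) (Hn : (2 <= n)%nat) (Hrho : 1 <= rho) :
  (* (a) *)
  ((exists Q, Pnr n rho Q) /\ convex_set (Pnr n rho) /\ seq_compact n (Pnr n rho))
  /\
  (* (b) *)
  (forall Q, pmf n Q -> full_support n Q ->
     (exists P, Pnr n rho P /\ forall P', Pnr n rho P' -> Df f n P' Q <= Df f n P Q) /\
     (exists P, Pnr n rho P /\ forall P', Pnr n rho P' -> Df f n Q P' <= Df f n Q P))
  /\
  (* (c) *)
  (1 < rho ->
     (forall b, Gamma_n n rho b -> Pnr n rho (Qbeta n rho b)) /\
     uf f n rho = maxval (Gamma_n n rho) (fun b => Df f n (Qbeta n rho b) (Un n)) /\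
     vf f n rho = maxval (Gamma_n n rho) (fun b => Df f n (Un n) (Qbeta n rho b)))
  /\
  (* (d) *)
  (maxval (fun m => (m <= n)%nat) (fun m => gf f rho (INR m / INR n)) <= uf f n rho /\
   uf f n rho <= maxval unit_interval (gf f rho) /\
   maxval (fun m => (m <= n)%nat) (fun m => gf (fstar f) rho (INR m / INR n)) <= vf f n rho /\
   vf f n rho <= maxval unit_interval (gf (fstar f) rho))
  /\
  (* (e) *)
  (Un_cv (fun k => uf f k rho) (maxval unit_interval (gf f rho)) /\
   Un_cv (fun k => vf f k rho) (maxval unit_interval (hv f rho)))
  /\
  (* (f) *)
  (forall K, 0 <= K ->
     (forall x, 0 < x < 1 -> exists d, derivable_pt_lim (gf f rho) x d /\ d <= K) ->
     forall L, Un_cv (fun k => uf f k rho) L ->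
       0 <= L - uf f n rho /\ L - uf f n rho <= K / INR n)
  /\
  (* (g) *)
  ((forall f0, lim_right0 f f0 ->
      lim_infty (fun r => uf f n r) ((1 - / INR n) * f0 + f (INR n) / INR n)) /\
   (div_right0 f -> div_infty (fun r => uf f n r)) /\
   (forall f0, lim_right0 f f0 ->
      (forall t, 0 < t < INR n -> exists d, derivable_pt_lim f t d) ->
      forall Kn, is_lub (fun y => exists t d, 0 < t < INR n /\
                           derivable_pt_lim f t d /\ y = Rabs d) Kn ->
      forall Lu, lim_infty (fun r => uf f n r) Lu ->
        0 <= Lu - uf f n rho /\
        Lu - uf f n rho <= 2 * Kn * (INR n - 1) / (INR n + rho - 1)))
  /\
  (* (h) *)
  ((forall f1 f2 m M, twice_diff_pos f f1 f2 -> 0 <= m ->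
      (forall t, / rho <= t <= rho -> m <= f2 t <= M) ->
      forall Q, Pnr n rho Q ->
        0 <= / 2 * m * (INR n * norm2 n Q ^ 2 - 1) /\
        / 2 * m * (INR n * norm2 n Q ^ 2 - 1) <= Df f n Q (Un n) /\
        Df f n Q (Un n) <= / 2 * M * (INR n * norm2 n Q ^ 2 - 1) /\
        / 2 * M * (INR n * norm2 n Q ^ 2 - 1) <= M * (rho - 1) ^ 2 / (8 * rho)) /\
   (forall Q, Pnr n rho Q -> Df chi2 n Q (Un n) = INR n * norm2 n Q ^ 2 - 1))
  /\
  (* (i) *)
  (forall d f1 f2 Mf, 0 < d -> 0 < Mf -> twice_diff_pos f f1 f2 ->
     (forall t, 0 < t -> f2 t <= Mf) ->
     rho <= 1 + 4 * d / Mf + sqrt (8 * d / Mf + 16 * d ^ 2 / Mf ^ 2) ->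
     forall Q, Pnr n rho Q -> Df f n Q (Un n) <= d).
Proof.
  assert (Hn1 : (1 <= n)%nat) by lia.
  assert (Hp : pcont f) by (intros t Ht; apply conv_cont; auto).
  assert (Hps : pcont (fstar f)) by (apply fstar_cont; auto).
  destruct (gf_max f rho Hp Hrho) as [xs [Hxs Hmx]].
  destruct (gf_max (fstar f) rho Hps Hrho) as [ys [Hys Hmy]].
  assert (Emx : maxval unit_interval (gf f rho) = gf f rho xs) by (apply maxval_eq; auto).
  assert (Emy : maxval unit_interval (gf (fstar f) rho) = gf (fstar f) rho ys) by (apply maxval_eq; auto).
  assert (Ehv : maxval unit_interval (hv f rho) = gf (fstar f) rho ys).
  { apply maxval_eq. apply (is_max_ext _ (gf (fstar f) rho)); auto. intros x Hx; apply hv_eq; auto. }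
  destruct (uf_char f n rho Hconv Hn1 Hrho) as [Hu1 Hu2].
  destruct (vf_char f n rho Hconv Hn1 Hrho) as [Hv1 Hv2].
  assert (Hlimu : Un_cv (fun k => uf f k rho) (gf f rho xs)).
  { apply grid_limit; auto. intros k Hk. apply (uf_char f k rho Hconv Hk Hrho). }
  assert (Hlimv : Un_cv (fun k => vf f k rho) (gf (fstar f) rho ys)).
  { apply grid_limit; auto. intros k Hk. apply (vf_char f k rho Hconv Hk Hrho). }
  split; [|split; [|split; [|split; [|split; [|split; [|split; [|split]]]]]]].
  -
    split; [|split].
    + exists (V n rho (fun _ => true)). apply Pnr_iff; auto. apply V_Pn'; auto.
    + apply part_a_convex; auto.
    + apply part_a_compact; auto.
  -
    intros Q HQ HQf. split.
    + destruct (vertex_max (psi1 f Q) n rho (psi1_conv f Q Hconv) Hn1 Hrho) as [Ts [HTs Hm]].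
      exists (V n rho Ts). split; auto. intros P' HP'. rewrite <- !obj_psi1 by auto. auto.
    + destruct (vertex_max (psi2 f Q) n rho (psi2_conv f Q Hconv) Hn1 Hrho) as [Ts [HTs Hm]].
      exists (V n rho Ts). split; auto. intros P' HP'. rewrite <- !obj_psi2 by auto. auto.
  -
    intros Hr1. split; [|split].
    + intros b Hb. apply Pnr_iff; auto. apply Qbeta_Pn'; auto.
    + symmetry. apply maxval_eq. apply (gamma_max n rho (fun P => Df f n P (Un n)) (gf f rho)); auto.
      intros P P' H; apply Df_ext1; auto. intros T; apply unif_V1; auto. apply gf_10; auto.
    + symmetry. apply maxval_eq. apply (gamma_max n rho (fun P => Df f n (Un n) P) (gf (fstar f) rho)); auto.
      intros P P' H; apply Df_ext2; auto. intros T; apply unif_V2; auto. apply gf_10; auto.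
  -
    rewrite Emx, Emy. split; [|split; [|split]].
    + right. apply maxval_eq; auto.
    + apply (max_grid_bound f rho n xs Hp Hrho Hn1 Hmx); auto.
    + right. apply maxval_eq; auto.
    + apply (max_grid_bound (fstar f) rho n ys Hps Hrho Hn1 Hmy); auto.
  -
    rewrite Emx, Ehv. split; auto.
  -
    intros K HK Hd L HL. rewrite (UL_sequence _ _ _ HL Hlimu). apply part_f; auto.
  -
    split; [|split].
    + intros f0 Hl. apply part_g1; auto.
    + intros Hd. apply part_g2; auto.
    + intros f0 Hl Hder Kn HK Lu HLu. apply (part_g3 f n rho f0); auto.
  -
    split.
    + intros f1 f2 m M Htd Hm Hb Q HQ. apply (part_h f n rho Hconv Hf1 Hn1 Hrho f1 f2 m M); auto.
    + intros Q HQ. apply (part_h2 n rho Q); auto.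
  -
    intros d f1 f2 Mf Hd HM Htd Hb Hr Q HQ. apply (part_i f n rho Hconv Hf1 Hn1 Hrho d f1 f2 Mf); auto.
Qed.
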